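(* Let $A\in\mathbb{R}^{n\times n}$ be Metzler, $J\in\mathbb{R}^{n\times n}$ be nonnegative and $\bar T>0$. The following statements are equivalent: (a) There exist $\lambda,\mu,\nu\in\mathbb{R}^n_{>0}$ such that $\lambda^\top Ax\le-\mu^\top x$ for all $x\in\mathbb{R}^n_{\ge0}$ and $\lambda^\top Je^{A\theta}x-\lambda^\top x\le-\nu^\top x$ for all $x\in\mathbb{R}^n_{\ge0}$ and all $\theta\ge\bar T$. (b) There exists $\lambda\in\mathbb{R}^n_{>0}$ such that $\lambda^\top A<0$ and $\lambda^\top Je^{A\theta}-\lambda^\top<0$ for all $\theta\ge\bar T$. (c) There exists $\lambda\in\mathbb{R}^n_{>0}$ such that $\lambda^\top A<0$ and $\lambda^\top Je^{A\bar T}-\lambda^\top<0$. (d) There exists $\lambda\in\mathbb{R}^n_{>0}$ with $\lambda^\top A<0$ and $\lambda^\top(Je^{A\bar T}-I_n)<0$ (a common linear copositive Lyapunov function for the pair $(A,Je^{A\bar T}-I_n)$). (e) $\ker\begin{bmatrix} I_n & -A & -(Je^{A\bar T}-I_n)\end{bmatrix}\cap\mathbb{R}^{3n}_{\ge0}=\{0\}$. (f) There exist a differentiable $\zeta:[0,\bar T]\to\mathbb{R}^n$ with $\zeta(\bar T)\in\mathbb{R}^n_{>0}$ and $\varepsilon>0$ such that $\zeta(\bar T)^\top A<0$, $\zeta(\tau)^\top A-\dot\zeta(\tau)^\top\le0$ for all $\tau\in[0,\bar T]$, and $\zeta(\bar T)^\top J-\zeta(0)^\top+\varepsilon\mathbf{1}_n^\top\le0$.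 (g) There exist a differentiable $\xi:[0,\bar T]\to\mathbb{R}^n$ with $\xi(0)\in\mathbb{R}^n_{>0}$ and $\varepsilon>0$ such that $\xi(0)^\top A<0$, $\xi(\tau)^\top A+\dot\xi(\tau)^\top\le0$ for all $\tau\in[0,\bar T]$, and $\xi(0)^\top J-\xi(\bar T)^\top+\varepsilon\mathbf{1}_n^\top\le0$. Moreover, if one of these statements holds, the impulsive system is asymptotically stable under minimum dwell-time $\bar T$.
   Context: Consider the linear impulsive system $\dot x(t)=Ax(t)$ for $t\neq t_k$, $x(t_k^+)=Jx(t_k)$, $x(t_0)=x_0$, where $x(t)\in\mathbb{R}^n$, $x(t^+):=\lim_{s\downarrow t}x(s)$, and the impulse times $\{t_k\}_{k\in\mathbb{N}}$ are strictly increasing with $t_k\to\infty$; $T_k:=t_{k+1}-t_k$. A matrix is Metzler if its off-diagonal entries are nonnegative and nonnegative if all entries are nonnegative. Vector inequalities are componentwise; $\mathbf{1}_n$ is the vector of ones. ''Asymptotically stable under minimum dwell-time $\bar T$'' means the zero solution is globally asymptotically stable for every impulse sequence with $\bar T\le T_k<\infty$ for all $k$. *)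

(* Defs.v *)
From Stdlib Require Import Reals Lra Arith ClassicalEpsilon.
Open Scope R_scope.

(* Vectors in R^n and n x n matrices are represented by functions on indices;
   only indices < n are meaningful. *)
Definition vec := nat -> R.
Definition mat := nat -> nat -> R.

Fixpoint rsum (m : nat) (f : nat -> R) : R :=
  match m with O => 0 | S k => rsum k f + f k end.

Definition ident : mat := fun i j => if Nat.eqb i j then 1 else 0.
Definition mmul (n : nat) (A B : mat) : mat :=
  fun i j => rsum n (fun k => A i k * B k j).
Definition msub (A B : mat) : mat := fun i j => A i j - B i j.
Fixpoint mpow (n : nat) (A : mat) (k : nat) : mat :=
  match k with O => ident | S k' => mmul n A (mpow n A k') end.

Definition mv (n : nat) (A : mat) (x : vec) : vec :=
  fun i => rsum n (fun j => A i j * x j).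
Definition vm (n : nat) (l : vec) (A : mat) : vec :=
  fun j => rsum n (fun i => l i * A i j).
Definition dot (n : nat) (l x : vec) : R := rsum n (fun i => l i * x i).
Definition vnorm (n : nat) (x : vec) : R := rsum n (fun i => Rabs (x i)).

Definition vpos (n : nat) (v : vec) : Prop := forall i, (i < n)%nat -> 0 < v i.
Definition vnonneg (n : nat) (v : vec) : Prop := forall i, (i < n)%nat -> 0 <= v i.
Definition vneg (n : nat) (v : vec) : Prop := forall i, (i < n)%nat -> v i < 0.
Definition vnonpos (n : nat) (v : vec) : Prop := forall i, (i < n)%nat -> v i <= 0.

Definition Metzler (n : nat) (A : mat) : Prop :=
  forall i j, (i < n)%nat -> (j < n)%nat -> i <> j -> 0 <= A i j.
Definition nonneg_mat (n : nat) (J : mat) : Prop :=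
  forall i j, (i < n)%nat -> (j < n)%nat -> 0 <= J i j.

(* Matrix exponential e^{A t} = sum_k t^k/k! A^k (entrywise limit of the
   partial sums; the series always converges, so this picks its sum). *)
Definition mexp_partial (n : nat) (A : mat) (t : R) (i j : nat) (N : nat) : R :=
  sum_f_R0 (fun k => t ^ k / INR (Factorial.fact k) * mpow n A k i j) N.
Definition mexp (n : nat) (A : mat) (t : R) : mat :=
  fun i j => epsilon (inhabits 0) (fun l => Un_cv (mexp_partial n A t i j) l).

(* f' is the derivative of f on [a,b] (one-sided at the endpoints). *)
Definition has_deriv_on (a b : R) (f f' : R -> R) : Prop :=
  forall tau, a <= tau <= b ->
  forall eps, 0 < eps -> exists delta, 0 < delta /\
    forall s, a <= s <= b -> 0 < Rabs (s - tau) < delta ->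
      Rabs ((f s - f tau) / (s - tau) - f' tau) < eps.

Definition vdiff_on (n : nat) (a b : R) (z dz : R -> vec) : Prop :=
  forall i, (i < n)%nat -> has_deriv_on a b (fun s => z s i) (fun s => dz s i).

Definition admissible (Tbar : R) (t : nat -> R) : Prop :=
  (forall k, t k < t (S k)) /\ cv_infty t /\ (forall k, Tbar <= t (S k) - t k).

(* x is the solution on [t_0, oo) of  xdot = A x (t <> t_k),
   x(t_k^+) = J x(t_k) (k >= 1),  x(t_0) = x0; x is left-continuous at
   impulse times, i.e. x(t_k) is the pre-jump value. *)
Definition is_solution (n : nat) (A J : mat) (t : nat -> R) (x0 : vec)
  (x : R -> vec) : Prop :=
  (forall i, (i < n)%nat -> x (t O) i = x0 i) /\
  (forall k tau, t k < tau <= t (S k) ->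
     forall i, (i < n)%nat ->
       x tau i = mv n (mexp n A (tau - t k))
                   (match k with O => x0 | S _ => mv n J (x (t k)) end) i).

Definition GAS_seq (n : nat) (A J : mat) (t : nat -> R) : Prop :=
  (forall eps, 0 < eps -> exists delta, 0 < delta /\
     forall x0 x, is_solution n A J t x0 x -> vnorm n x0 < delta ->
       forall tau, t O <= tau -> vnorm n (x tau) < eps) /\
  (forall x0 x, is_solution n A J t x0 x ->
     forall eps, 0 < eps -> exists T, forall tau, T <= tau ->
       vnorm n (x tau) < eps).

Definition AS_min_dwell (n : nat) (A J : mat) (Tbar : R) : Prop :=
  forall t, admissible Tbar t -> GAS_seq n A J t.

(* The n x 3n matrix [ I_n  -A  -(M)] with M = J e^{A Tbar} - I_n. *)
Definition blockK (n : nat) (A M : mat) : mat :=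
  fun i j => if Nat.ltb j n then ident i j
             else if Nat.ltb j (2 * n)%nat then - A i (j - n)%nat
             else - M i (j - 2 * n)%nat.

(* Main.v *)
Require Import Defs.
From Stdlib Require Import Reals Lra Lia Arith List ClassicalEpsilon.
From Coquelicot Require Import Coquelicot.
Import ListNotations.
Open Scope R_scope.

Lemma rsum_ext m f g : (forall i, (i < m)%nat -> f i = g i) -> rsum m f = rsum m g.
Proof. induction m; intros H; simpl; auto. rewrite IHm by (intros; apply H; lia). rewrite H by lia. auto. Qed.

Lemma rsum_plus m f g : rsum m (fun i => f i + g i) = rsum m f + rsum m g.
Proof. induction m; simpl; [lra|]. rewrite IHm. lra. Qed.

Lemma rsum_minus m f g : rsum m (fun i => f i - g i) = rsum m f - rsum m g.
Proof. induction m; simpl; [lra|]. rewrite IHm. lra. Qed.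

Lemma rsum_scal m c f : rsum m (fun i => c * f i) = c * rsum m f.
Proof. induction m; simpl; [lra|]. rewrite IHm. lra. Qed.

Lemma rsum_scal_r m c f : rsum m (fun i => f i * c) = rsum m f * c.
Proof. induction m; simpl; [lra|]. rewrite IHm. lra. Qed.

Lemma rsum_zero m : rsum m (fun _ => 0) = 0.
Proof. induction m; simpl; [lra|]. rewrite IHm. lra. Qed.

Lemma rsum_swap m k (f : nat -> nat -> R) :
  rsum m (fun i => rsum k (fun j => f i j)) = rsum k (fun j => rsum m (fun i => f i j)).
Proof.
  induction m; simpl. { rewrite rsum_zero; auto. }
  rewrite IHm, <- rsum_plus. auto.
Qed.

Lemma rsum_le m f g : (forall i, (i < m)%nat -> f i <= g i) -> rsum m f <= rsum m g.
Proof. induction m; intros H; simpl; [lra|]. pose proof (H m ltac:(lia)).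
  pose proof (IHm ltac:(intros; apply H; lia)). lra. Qed.

Lemma rsum_nonneg m f : (forall i, (i < m)%nat -> 0 <= f i) -> 0 <= rsum m f.
Proof. intros H. rewrite <- (rsum_zero m). apply rsum_le. auto. Qed.

Lemma rsum_ge_term m f i : (forall i, (i < m)%nat -> 0 <= f i) -> (i < m)%nat -> f i <= rsum m f.
Proof.
  induction m; intros H Hi; [lia|]. simpl.
  destruct (Nat.eq_dec i m).
  - subst. pose proof (rsum_nonneg m f ltac:(intros; apply H; lia)). lra.
  - pose proof (IHm ltac:(intros; apply H; lia) ltac:(lia)). pose proof (H m ltac:(lia)). lra.
Qed.

Lemma rsum_lt m f g : (forall i, (i < m)%nat -> f i < g i) -> (0 < m)%nat -> rsum m f < rsum m g.
Proof. induction m; intros H Hm; [lia|]. simpl. destruct m.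
  - simpl. pose proof (H 0%nat ltac:(lia)). lra.
  - pose proof (IHm ltac:(intros; apply H; lia) ltac:(lia)). pose proof (H (S m) ltac:(lia)). lra. Qed.

Lemma rsum_abs m f : Rabs (rsum m f) <= rsum m (fun i => Rabs (f i)).
Proof. induction m; simpl. { rewrite Rabs_R0; lra. }
  eapply Rle_trans. apply Rabs_triang. lra. Qed.

Lemma rsum_delta m (i : nat) (x : nat -> R) : (i < m)%nat ->
  rsum m (fun j => ident i j * x j) = x i.
Proof.
  induction m; intros Hi; [lia|]. simpl. unfold ident at 2.
  destruct (Nat.eq_dec i m).
  - subst. rewrite Nat.eqb_refl. rewrite (rsum_ext m _ (fun _ => 0)). rewrite rsum_zero. lra.
    intros j Hj. unfold ident. replace (Nat.eqb m j) with false. lra. symmetry. apply Nat.eqb_neq. lia.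
  - rewrite IHm by lia. replace (Nat.eqb i m) with false. lra. symmetry. apply Nat.eqb_neq. lia.
Qed.

Lemma rsum_delta_l m (j : nat) (x : nat -> R) : (j < m)%nat ->
  rsum m (fun i => x i * ident i j) = x j.
Proof.
  intros Hj. rewrite <- (rsum_delta m j x Hj). apply rsum_ext. intros i _.
  unfold ident. rewrite Nat.eqb_sym. lra.
Qed.

Lemma mmul_assoc n A B C i j :
  mmul n (mmul n A B) C i j = mmul n A (mmul n B C) i j.
Proof.
  unfold mmul. 
  transitivity (rsum n (fun k => rsum n (fun l => A i l * B l k * C k j))).
  { apply rsum_ext. intros k _. rewrite <- rsum_scal_r. apply rsum_ext. intros; lra. }
  rewrite rsum_swap. apply rsum_ext. intros l _. rewrite <- rsum_scal. apply rsum_ext. intros; lra.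
Qed.

Lemma mmul_ident_l n A i j : (i < n)%nat -> mmul n ident A i j = A i j.
Proof. intros. unfold mmul. apply (rsum_delta n i (fun k => A k j)); auto. Qed.

Lemma mmul_ident_r n A i j : (j < n)%nat -> mmul n A ident i j = A i j.
Proof. intros. unfold mmul. apply (rsum_delta_l n j (fun k => A i k)); auto. Qed.

Lemma mpow_succ_r n A k i j : (i < n)%nat -> (j < n)%nat ->
  mpow n A (S k) i j = mmul n (mpow n A k) A i j.
Proof.
  revert i j. induction k; intros i j Hi Hj.
  - simpl. rewrite mmul_ident_l by auto. apply mmul_ident_r. auto.
  - change (mpow n A (S (S k)) i j) with (mmul n A (mpow n A (S k)) i j).
    transitivity (mmul n A (mmul n (mpow n A k) A) i j).
    { unfold mmul at 1 2. apply rsum_ext. intros l Hl. rewrite IHk by auto. auto. }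
    rewrite <- mmul_assoc. reflexivity.
Qed.

Lemma vm_mmul n l A B j : vm n l (mmul n A B) j = vm n (vm n l A) B j.
Proof.
  unfold vm, mmul.
  transitivity (rsum n (fun i => rsum n (fun k => l i * A i k * B k j))).
  { apply rsum_ext. intros. rewrite <- rsum_scal. apply rsum_ext; intros; lra. }
  rewrite rsum_swap. apply rsum_ext. intros. rewrite <- rsum_scal_r. apply rsum_ext; intros; lra.
Qed.

Lemma dot_mv n l A x : dot n l (mv n A x) = dot n (vm n l A) x.
Proof.
  unfold dot, mv, vm.
  transitivity (rsum n (fun i => rsum n (fun k => l i * A i k * x k))).
  { apply rsum_ext. intros. rewrite <- rsum_scal. apply rsum_ext; intros; lra. }
  rewrite rsum_swap. apply rsum_ext. intros. rewrite <- rsum_scal_r. apply rsum_ext; intros; lra.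
Qed.

Definition evec (j : nat) : vec := fun k => if Nat.eqb k j then 1 else 0.

Lemma dot_evec n l j : (j < n)%nat -> dot n l (evec j) = l j.
Proof. intros. unfold dot. rewrite <- (rsum_delta_l n j l H). apply rsum_ext. intros.
  unfold evec, ident. reflexivity. Qed.

Lemma evec_nonneg n j : vnonneg n (evec j).
Proof. intros k _. unfold evec. destruct (Nat.eqb k j); lra. Qed.

Lemma vm_mono n l1 l2 M : nonneg_mat n M -> (forall i, (i < n)%nat -> l1 i <= l2 i) ->
  forall j, (j < n)%nat -> vm n l1 M j <= vm n l2 M j.
Proof. intros HM Hl j Hj. unfold vm. apply rsum_le. intros i Hi.
  apply Rmult_le_compat_r. apply HM; auto. apply Hl; auto. Qed.

Lemma dot_mono n l x1 x2 : vnonneg n l -> (forall i, (i < n)%nat -> x1 i <= x2 i) ->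
  dot n l x1 <= dot n l x2.
Proof. intros Hl Hx. unfold dot. apply rsum_le. intros i Hi.
  apply Rmult_le_compat_l. apply Hl; auto. apply Hx; auto. Qed.

Lemma dot_mono_l n l1 l2 x : vnonneg n x -> (forall i, (i < n)%nat -> l1 i <= l2 i) ->
  dot n l1 x <= dot n l2 x.
Proof. intros Hl Hx. unfold dot. apply rsum_le. intros i Hi.
  apply Rmult_le_compat_r. apply Hl; auto. apply Hx; auto. Qed.

Definition Mbound (n : nat) (A : mat) : R :=
  1 + rsum n (fun i => rsum n (fun l => Rabs (A i l))).
Definition Crow (n : nat) (A : mat) (i : nat) : R := 1 + rsum n (fun l => Rabs (A i l)).

Lemma Mbound_ge1 n A : 1 <= Mbound n A.
Proof. unfold Mbound. pose proof (rsum_nonneg n (fun i => rsum n (fun l => Rabs (A i l)))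
  ltac:(intros; apply rsum_nonneg; intros; apply Rabs_pos)). lra. Qed.

Lemma Crow_ge1 n A i : 1 <= Crow n A i.
Proof. unfold Crow. pose proof (rsum_nonneg n (fun l => Rabs (A i l)) ltac:(intros; apply Rabs_pos)). lra. Qed.

Lemma mpow_bound_in n A k : forall l j, (l < n)%nat -> Rabs (mpow n A k l j) <= (Mbound n A) ^ k.
Proof.
  induction k; intros l j Hl.
  - simpl. unfold ident. destruct (Nat.eqb l j); rewrite ?Rabs_R1, ?Rabs_R0; lra.
  - simpl. unfold mmul. eapply Rle_trans. apply rsum_abs.
    eapply Rle_trans. apply (rsum_le _ _ (fun m => Rabs (A l m) * Mbound n A ^ k)).
    { intros m Hm. rewrite Rabs_mult. apply Rmult_le_compat_l. apply Rabs_pos. apply IHk; auto. }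
    rewrite rsum_scal_r. apply Rmult_le_compat_r. apply pow_le. pose proof (Mbound_ge1 n A); lra.
    unfold Mbound.
    pose proof (rsum_ge_term n (fun i => rsum n (fun l => Rabs (A i l))) l
      ltac:(intros; apply rsum_nonneg; intros; apply Rabs_pos) Hl). simpl in H. lra.
Qed.

Lemma mpow_bound n A k i j : Rabs (mpow n A k i j) <= Crow n A i * (Mbound n A) ^ k.
Proof.
  destruct k.
  - simpl. pose proof (Crow_ge1 n A i). unfold ident. destruct (Nat.eqb i j); rewrite ?Rabs_R1, ?Rabs_R0; lra.
  - simpl. unfold mmul. eapply Rle_trans. apply rsum_abs.
    eapply Rle_trans. apply (rsum_le _ _ (fun m => Rabs (A i m) * Mbound n A ^ k)).
    { intros m Hm. rewrite Rabs_mult. apply Rmult_le_compat_l. apply Rabs_pos. apply mpow_bound_in; auto. }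
    rewrite rsum_scal_r. pose proof (Mbound_ge1 n A). pose proof (Crow_ge1 n A i).
    assert (0 <= Mbound n A ^ k) by (apply pow_le; lra).
    unfold Crow in *. 
    assert (Mbound n A ^ k <= Mbound n A * Mbound n A ^ k) by nra. nra.
Qed.

Definition acoef (n : nat) (A : mat) (i j : nat) (k : nat) : R :=
  mpow n A k i j / INR (Factorial.fact k).

Lemma exp_series_ex (x : R) : ex_series (fun k => / INR (Factorial.fact k) * x ^ k).
Proof. destruct (exist_exp x) as [l Hl]. exists l. apply is_series_Reals. exact Hl. Qed.

Lemma acoef_CV_disk n A i j x : CV_disk (acoef n A i j) x.
Proof.
  unfold CV_disk.
  apply (@ex_series_le R_AbsRing R_CompleteNormedModule _ (fun k => Crow n A i * (/ INR (Factorial.fact k) * (Mbound n A * Rabs x) ^ k))).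
  - intros k. unfold norm; simpl. unfold abs; simpl. rewrite Rabs_Rabsolu.
    unfold acoef. rewrite Rabs_mult. unfold Rdiv. rewrite Rabs_mult.
    rewrite Rpow_mult_distr. rewrite <- RPow_abs.
    rewrite (Rabs_right (/ _)). 2:{ apply Rle_ge. left. apply Rinv_0_lt_compat. apply INR_fact_lt_0. }
    pose proof (mpow_bound n A k i j).
    assert (0 < / INR (Factorial.fact k)) by (apply Rinv_0_lt_compat; apply INR_fact_lt_0).
    assert (0 <= Rabs x ^ k) by (apply pow_le; apply Rabs_pos).
    assert (Rabs (mpow n A k i j) * / INR (Factorial.fact k) * Rabs x ^ k <=
            Crow n A i * Mbound n A ^ k * / INR (Factorial.fact k) * Rabs x ^ k).
    { apply Rmult_le_compat_r; auto. apply Rmult_le_compat_r; lra. }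
    lra.
  - apply (ex_series_scal_l (Crow n A i) (fun k => / INR (Factorial.fact k) * (Mbound n A * Rabs x) ^ k)).
    apply exp_series_ex.
Qed.

Lemma acoef_radius n A i j x : Rbar_lt (Rabs x) (CV_radius (acoef n A i j)).
Proof.
  assert (H := Lub_Rbar_correct (CV_disk (acoef n A i j))).
  destruct H as [Hub _]. specialize (Hub (Rabs x + 1) (acoef_CV_disk n A i j _)).
  unfold CV_radius. destruct (Lub_Rbar (CV_disk (acoef n A i j))); simpl in *; auto; lra.
Qed.

Lemma acoef_ex n A i j x : ex_pseries (acoef n A i j) x.
Proof. apply CV_disk_correct. apply acoef_CV_disk. Qed.

Lemma mexp_PSeries n A t i j : mexp n A t i j = PSeries (acoef n A i j) t.
Proof.
  unfold mexp.
  assert (HP : Un_cv (mexp_partial n A t i j) (PSeries (acoef n A i j) t)).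
  { pose proof (PSeries_correct _ _ (acoef_ex n A i j t)) as H.
    unfold is_pseries in H. 
    apply is_lim_seq_Reals. unfold is_series in H.
    eapply is_lim_seq_ext. 2: exact H.
    intros N. simpl. rewrite sum_n_Reals. unfold mexp_partial.
    apply sum_eq. intros k _. rewrite pow_n_pow. unfold scal; simpl. unfold mult; simpl.
    unfold acoef. unfold Rdiv. ring. }
  apply (UL_sequence (mexp_partial n A t i j)); auto.
  apply (epsilon_spec (inhabits 0) (fun l => Un_cv (mexp_partial n A t i j) l)).
  exists (PSeries (acoef n A i j) t). exact HP.
Qed.

Lemma PSeries_rsum m (c : nat -> R) (b : nat -> nat -> R) x :
  (forall l, ex_pseries (b l) x) ->
  ex_pseries (fun k => rsum m (fun l => c l * b l k)) x /\
  PSeries (fun k => rsum m (fun l => c l * b l k)) x = rsum m (fun l => c l * PSeries (b l) x).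
Proof.
  intros Hb. induction m.
  - simpl. split.
    + apply (ex_pseries_ext (PS_scal 0 (b 0%nat))).
      intros k. unfold PS_scal, scal; simpl. unfold mult; simpl. ring.
      apply ex_pseries_scal. unfold mult; simpl. ring. auto.
    + apply PSeries_const_0.
  - destruct IHm as [IH1 IH2].
    assert (He : ex_pseries (PS_scal (c m) (b m)) x).
    { apply ex_pseries_scal. unfold mult; simpl. ring. auto. }
    assert (Hx : ex_pseries (fun k => rsum (S m) (fun l => c l * b l k)) x).
    { apply (ex_pseries_ext (PS_plus (fun k => rsum m (fun l => c l * b l k)) (PS_scal (c m) (b m)))).
      intros k. unfold PS_plus, PS_scal, plus, scal; simpl. unfold mult; simpl. reflexivity.
      apply ex_pseries_plus; auto. }
    split; [exact Hx|].
    simpl. rewrite <- IH2. rewrite <- PSeries_scal. rewrite <- PSeries_plus; auto.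
Qed.

Lemma mexp_deriv_l n A t i j :
  derivable_pt_lim (fun s => mexp n A s i j) t (mmul n A (mexp n A t) i j).
Proof.
  apply is_derive_Reals.
  apply (is_derive_ext (PSeries (acoef n A i j))). { intros; symmetry; apply mexp_PSeries. }
  replace (mmul n A (mexp n A t) i j) with (PSeries (PS_derive (acoef n A i j)) t).
  apply is_derive_PSeries. apply acoef_radius.
  unfold mmul.
  rewrite (rsum_ext n _ (fun l => A i l * PSeries (acoef n A l j) t)).
  2:{ intros. rewrite mexp_PSeries. auto. }
  rewrite <- (proj2 (PSeries_rsum n (fun l => A i l) (fun l => acoef n A l j) t (fun l => acoef_ex n A l j t))).
  apply PSeries_ext. intros k. unfold PS_derive, acoef.
  replace (INR (Factorial.fact (S k))) with (INR (S k) * INR (Factorial.fact k))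
    by (rewrite <- mult_INR; reflexivity).
  simpl mpow. unfold mmul.
  rewrite (rsum_ext n (fun l => A i l * (mpow n A k l j / INR (Factorial.fact k)))
     (fun l => A i l * mpow n A k l j * / INR (Factorial.fact k))) by (intros; unfold Rdiv; ring).
  rewrite rsum_scal_r. field. split. apply INR_fact_neq_0. apply not_0_INR. lia.
Qed.

Lemma mexp_deriv_r n A t i j : (i < n)%nat -> (j < n)%nat ->
  derivable_pt_lim (fun s => mexp n A s i j) t (mmul n (mexp n A t) A i j).
Proof.
  intros Hi Hj.
  apply is_derive_Reals.
  apply (is_derive_ext (PSeries (acoef n A i j))). { intros; symmetry; apply mexp_PSeries. }
  replace (mmul n (mexp n A t) A i j) with (PSeries (PS_derive (acoef n A i j)) t).
  apply is_derive_PSeries. apply acoef_radius.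
  unfold mmul.
  rewrite (rsum_ext n _ (fun l => A l j * PSeries (acoef n A i l) t)).
  2:{ intros. rewrite mexp_PSeries. ring. }
  rewrite <- (proj2 (PSeries_rsum n (fun l => A l j) (fun l => acoef n A i l) t (fun l => acoef_ex n A i l t))).
  apply PSeries_ext. intros k. unfold PS_derive, acoef.
  replace (INR (Factorial.fact (S k))) with (INR (S k) * INR (Factorial.fact k))
    by (rewrite <- mult_INR; reflexivity).
  rewrite mpow_succ_r by auto. unfold mmul.
  rewrite (rsum_ext n (fun l => A l j * (mpow n A k i l / INR (Factorial.fact k)))
     (fun l => mpow n A k i l * A l j * / INR (Factorial.fact k))) by (intros; unfold Rdiv; ring).
  rewrite rsum_scal_r. field. split. apply INR_fact_neq_0. apply not_0_INR. lia.
Qed.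

Lemma mexp_0 n A i j : mexp n A 0 i j = ident i j.
Proof. rewrite mexp_PSeries, PSeries_0. unfold acoef. simpl. lra. Qed.

Lemma mexp_cont n A i j t : continuity_pt (fun s => mexp n A s i j) t.
Proof. apply derivable_continuous_pt. exists (mmul n A (mexp n A t) i j). apply mexp_deriv_l. Qed.

Lemma dpl_ext f g t l : (forall s, f s = g s) -> derivable_pt_lim f t l -> derivable_pt_lim g t l.
Proof. intros E H eps Heps. destruct (H eps Heps) as [d Hd]. exists d. intros h Hh0 Hh.
  rewrite <- !E. apply Hd; auto. Qed.

Lemma dpl_eq l1 f t l2 : derivable_pt_lim f t l1 -> l1 = l2 -> derivable_pt_lim f t l2.
Proof. intros H E; subst; auto. Qed.

Lemma dpl_plus f g t l1 l2 : derivable_pt_lim f t l1 -> derivable_pt_lim g t l2 ->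
  derivable_pt_lim (fun s => f s + g s) t (l1 + l2).
Proof. intros H1 H2. exact (derivable_pt_lim_plus f g t l1 l2 H1 H2). Qed.

Lemma dpl_minus f g t l1 l2 : derivable_pt_lim f t l1 -> derivable_pt_lim g t l2 ->
  derivable_pt_lim (fun s => f s - g s) t (l1 - l2).
Proof. intros H1 H2. exact (derivable_pt_lim_minus f g t l1 l2 H1 H2). Qed.

Lemma dpl_mult f g t l1 l2 : derivable_pt_lim f t l1 -> derivable_pt_lim g t l2 ->
  derivable_pt_lim (fun s => f s * g s) t (l1 * g t + f t * l2).
Proof. intros H1 H2. exact (derivable_pt_lim_mult f g t l1 l2 H1 H2). Qed.

Lemma dpl_const c t : derivable_pt_lim (fun _ => c) t 0.
Proof. exact (derivable_pt_lim_const c t). Qed.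

Lemma dpl_id t : derivable_pt_lim (fun s => s) t 1.
Proof. exact (derivable_pt_lim_id t). Qed.

Lemma dpl_comp f g t l1 l2 : derivable_pt_lim f t l1 -> derivable_pt_lim g (f t) l2 ->
  derivable_pt_lim (fun s => g (f s)) t (l2 * l1).
Proof. intros H1 H2. exact (derivable_pt_lim_comp f g t l1 l2 H1 H2). Qed.

Lemma dpl_exp_lin c t : derivable_pt_lim (fun s => exp (c * s)) t (exp (c * t) * c).
Proof.
  apply (dpl_comp (fun s => c * s) exp t c (exp (c*t))).
  - apply (dpl_ext (fun s => c * s + 0)); [intros; ring|].
    apply (dpl_eq (0 * t + c * 1 + 0)); [|ring].
    apply dpl_plus. apply (dpl_mult (fun _ => c) (fun s => s)). apply dpl_const. apply dpl_id. apply dpl_const.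
  - apply derivable_pt_lim_exp.
Qed.

Lemma dpl_rsum m (f : nat -> R -> R) (df : nat -> R) t :
  (forall l, (l < m)%nat -> derivable_pt_lim (f l) t (df l)) ->
  derivable_pt_lim (fun s => rsum m (fun l => f l s)) t (rsum m df).
Proof.
  induction m; intros H; simpl.
  - apply dpl_const.
  - apply (dpl_plus (fun s => rsum m (fun l => f l s)) (f m)).
    apply IHm; intros; apply H; lia. apply H; lia.
Qed.

Lemma deriv_nonpos_decr f f' a b : a <= b ->
  (forall c, a <= c <= b -> derivable_pt_lim f c (f' c)) ->
  (forall c, a <= c <= b -> f' c <= 0) -> f b <= f a.
Proof.
  intros Hab Hd Hn. destruct (Rle_lt_or_eq_dec a b Hab) as [Hlt|Heq].
  - destruct (MVT_cor2 f f' a b Hlt Hd) as [c [Hc1 Hc2]].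
    assert (f' c * (b - a) <= 0). { assert (f' c <= 0) by (apply Hn; lra).
      assert (0 < b - a) by lra. nra. } lra.
  - subst. lra.
Qed.

Lemma ode_unique n (B : mat) (x : R -> vec) :
  (forall t j, (j < n)%nat -> derivable_pt_lim (fun s => x s j) t (vm n (x t) B j)) ->
  (forall j, (j < n)%nat -> x 0 j = 0) ->
  forall t, 0 <= t -> forall j, (j < n)%nat -> x t j = 0.
Proof.
  intros Hd H0 t Ht j Hj.
  set (K := 2 * Mbound n B).
  set (S := fun s => rsum n (fun i => x s i * x s i)).
  set (u := fun s => exp (- K * s) * S s).
  assert (HS : forall s, derivable_pt_lim S s (rsum n (fun i => 2 * (x s i * vm n (x s) B i)))).
  { intros s. unfold S. apply (dpl_rsum n (fun i s => x s i * x s i)).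
    intros i Hi. apply (dpl_ext (fun s0 => x s0 i * x s0 i)). auto.
    replace (2 * (x s i * vm n (x s) B i)) with (vm n (x s) B i * x s i + x s i * vm n (x s) B i) by ring.
    apply dpl_mult; apply Hd; auto. }
  assert (Hbound : forall s, rsum n (fun i => 2 * (x s i * vm n (x s) B i)) <= K * S s).
  { intros s. unfold K, S.
    assert (Hsq : forall i, (i < n)%nat -> x s i * x s i <= rsum n (fun i => x s i * x s i)).
    { intros i Hi. apply (rsum_ge_term n (fun i => x s i * x s i)); auto. intros; cbv beta; nra. }
    set (SS := rsum n (fun i => x s i * x s i)) in *.
    assert (0 <= SS) by (apply rsum_nonneg; intros; nra).
    rewrite rsum_scal. unfold vm.
    assert (rsum n (fun i => x s i * rsum n (fun k => x s k * B k i)) <=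
            rsum n (fun i => rsum n (fun k => Rabs (B k i) * SS))).
    { apply rsum_le. intros i Hi. rewrite <- rsum_scal. apply rsum_le. intros k Hk.
      pose proof (Hsq i Hi). pose proof (Hsq k Hk).
      assert (Rabs (x s i * x s k) <= SS).
      { apply Rabs_le. pose proof (pow2_ge_0 (x s i - x s k)). pose proof (pow2_ge_0 (x s i + x s k)).
        split; nra. }
      assert (x s i * (x s k * B k i) <= Rabs (x s i * x s k) * Rabs (B k i)).
      { rewrite <- Rabs_mult. replace (x s i * (x s k * B k i)) with (x s i * x s k * B k i) by ring.
        apply RRle_abs. }
      pose proof (Rabs_pos (B k i)). nra. }
    assert (rsum n (fun i => rsum n (fun k => Rabs (B k i) * SS)) <= (Mbound n B - 1) * SS).
    { rewrite (rsum_ext n _ (fun i => rsum n (fun k => Rabs (B k i)) * SS)).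
      2:{ intros. apply rsum_scal_r. }
      rewrite rsum_scal_r. unfold Mbound. rewrite rsum_swap. lra. }
    pose proof (Mbound_ge1 n B). nra. }
  assert (Hu : forall s, derivable_pt_lim u s (exp (- K * s) * (- K) * S s + exp (- K * s) * rsum n (fun i => 2 * (x s i * vm n (x s) B i)))).
  { intros s. unfold u. apply (dpl_mult (fun s => exp (- K * s)) S). apply dpl_exp_lin. apply HS. }
  assert (Hdec : u t <= u 0).
  { eapply deriv_nonpos_decr. exact Ht. intros c _. apply Hu.
    intros c _. pose proof (Hbound c). pose proof (exp_pos (- K * c)).
    assert (exp (- K * c) * rsum n (fun i => 2 * (x c i * vm n (x c) B i)) <= exp (-K * c) * (K * S c)).
    { apply Rmult_le_compat_l; lra. } lra. }
  assert (HS0 : S 0 = 0).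
  { unfold S. rewrite (rsum_ext n _ (fun _ => 0)). apply rsum_zero. intros i Hi. rewrite H0; auto; ring. }
  unfold u in Hdec. rewrite HS0 in Hdec. rewrite Rmult_0_r in Hdec.
  assert (S t <= 0).
  { pose proof (exp_pos (- K * t)). destruct (Rle_or_lt (S t) 0); auto. nra. }
  assert (x t j * x t j <= S t). { unfold S. apply (rsum_ge_term n (fun i => x t i * x t i)); auto. intros; cbv beta; nra. }
  nra.
Qed.

Lemma vm_minus n a b M j : vm n (fun i => a i - b i) M j = vm n a M j - vm n b M j.
Proof. unfold vm. rewrite <- rsum_minus. apply rsum_ext. intros; ring. Qed.

Lemma dpl_vmE n A c t j : (j < n)%nat ->
  derivable_pt_lim (fun s => vm n c (mexp n A s) j) t (vm n (vm n c (mexp n A t)) A j).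
Proof.
  intros Hj. unfold vm at 1.
  apply (dpl_eq (rsum n (fun l => c l * mmul n (mexp n A t) A l j))).
  - apply (dpl_rsum n (fun l s => c l * mexp n A s l j)). intros l Hl.
    apply (dpl_eq (0 * mexp n A t l j + c l * mmul n (mexp n A t) A l j)); [|ring].
    apply (dpl_mult (fun _ => c l) (fun s => mexp n A s l j)). apply dpl_const.
    apply mexp_deriv_r; auto.
  - unfold mmul, vm. 
    rewrite (rsum_ext n _ (fun l => rsum n (fun k => c l * mexp n A t l k * A k j))).
    2:{ intros. rewrite <- rsum_scal. apply rsum_ext. intros; ring. }
    rewrite rsum_swap. apply rsum_ext. intros. rewrite <- rsum_scal_r. reflexivity.
Qed.

Lemma flow_repr n A (y : R -> vec) :
  (forall t j, (j < n)%nat -> derivable_pt_lim (fun s => y s j) t (vm n (y t) A j)) ->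
  forall t, 0 <= t -> forall j, (j < n)%nat -> y t j = vm n (y 0) (mexp n A t) j.
Proof.
  intros Hd t Ht j Hj.
  assert (H := ode_unique n A (fun s j => y s j - vm n (y 0) (mexp n A s) j)).
  cut (y t j - vm n (y 0) (mexp n A t) j = 0). lra.
  apply H; auto.
  - intros s k Hk. rewrite vm_minus. apply (dpl_minus (fun s => y s k)).
    apply Hd; auto. apply dpl_vmE; auto.
  - intros k Hk. unfold vm. rewrite (rsum_ext n _ (fun i => y 0 i * ident i k)).
    rewrite rsum_delta_l; auto. ring. intros. rewrite mexp_0. auto.
Qed.

Lemma mexp_row_deriv n A i t j : (i < n)%nat -> (j < n)%nat ->
  derivable_pt_lim (fun s => mexp n A s i j) t (vm n (fun l => mexp n A t i l) A j).
Proof. intros. apply mexp_deriv_r; auto. Qed.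

Lemma mexp_semigroup n A s t i j : 0 <= t -> (i < n)%nat -> (j < n)%nat ->
  mexp n A (s + t) i j = mmul n (mexp n A s) (mexp n A t) i j.
Proof.
  intros Ht Hi Hj.
  pose proof (flow_repr n A (fun u l => mexp n A (s + u) i l)) as H.
  rewrite H; auto.
  - unfold vm, mmul. apply rsum_ext. intros. rewrite Rplus_0_r. auto.
  - intros u k Hk. 
    apply (dpl_eq (vm n (fun l => mexp n A (s + u) i l) A k * 1)); [|ring].
    apply (dpl_comp (fun u => s + u) (fun v => mexp n A v i k)).
    apply (dpl_eq (0 + 1)); [|ring]. apply (dpl_plus (fun _ => s) (fun u => u)). apply dpl_const. apply dpl_id.
    apply mexp_deriv_r; auto.
Qed.

Lemma mexp_cv n A t i j : Un_cv (mexp_partial n A t i j) (mexp n A t i j).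
Proof.
  rewrite mexp_PSeries.
  pose proof (PSeries_correct _ _ (acoef_ex n A i j t)) as H0.
  unfold is_pseries in H0.
  apply is_lim_seq_Reals. unfold is_series in H0.
  eapply is_lim_seq_ext. 2: exact H0.
  intros N. simpl. rewrite sum_n_Reals. unfold mexp_partial.
  apply sum_eq. intros k _. rewrite pow_n_pow. unfold scal; simpl. unfold mult; simpl.
  unfold acoef. unfold Rdiv. ring.
Qed.

Definition shiftB n A : mat := fun i j => A i j + Mbound n A * ident i j.

Lemma diag_le_Mbound n A i : (i < n)%nat -> Rabs (A i i) <= Mbound n A - 1.
Proof.
  intros Hi. unfold Mbound.
  pose proof (rsum_ge_term n (fun l => Rabs (A i l)) i ltac:(intros; apply Rabs_pos) Hi).
  pose proof (rsum_ge_term n (fun i => rsum n (fun l => Rabs (A i l))) i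
      ltac:(intros; apply rsum_nonneg; intros; apply Rabs_pos) Hi). simpl in *. lra.
Qed.

Lemma shiftB_nonneg n A : Metzler n A -> nonneg_mat n (shiftB n A).
Proof.
  intros HA i j Hi Hj. unfold shiftB, ident.
  destruct (Nat.eq_dec i j).
  - subst. rewrite Nat.eqb_refl. pose proof (diag_le_Mbound n A j Hj).
    pose proof (Rabs_le_between (A j j) (Mbound n A - 1)) as [H1 _]. 
    destruct (H1 H). pose proof (Mbound_ge1 n A). lra.
  - replace (Nat.eqb i j) with false by (symmetry; apply Nat.eqb_neq; auto).
    pose proof (HA i j Hi Hj n0). lra.
Qed.

Lemma mpow_nonneg n B k : nonneg_mat n B -> nonneg_mat n (mpow n B k).
Proof.
  intros HB. induction k; intros i j Hi Hj; simpl.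
  - unfold ident. destruct (Nat.eqb i j); lra.
  - unfold mmul. apply rsum_nonneg. intros l Hl. apply Rmult_le_pos. apply HB; auto. apply IHk; auto.
Qed.

Lemma partial_ge n B t i j N : nonneg_mat n B -> 0 <= t -> (i < n)%nat -> (j < n)%nat ->
  (if Nat.eqb i j then 1 else 0) <= mexp_partial n B t i j N.
Proof.
  intros HB Ht Hi Hj. unfold mexp_partial. induction N; simpl.
  - unfold ident. destruct (Nat.eqb i j); simpl; lra.
  - assert (0 <= t * t ^ N / INR (Factorial.fact N + N * Factorial.fact N) *
       mmul n B (mpow n B N) i j).
    { apply Rmult_le_pos. unfold Rdiv. apply Rmult_le_pos. apply Rmult_le_pos; auto. apply pow_le; auto.
      left. apply Rinv_0_lt_compat. apply (INR_fact_lt_0 (S N)).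
      apply (mpow_nonneg n B (S N)); auto. }
    lra.
Qed.

Lemma mexp_ge_B n B t i j : nonneg_mat n B -> 0 <= t -> (i < n)%nat -> (j < n)%nat ->
  (if Nat.eqb i j then 1 else 0) <= mexp n B t i j.
Proof.
  intros HB Ht Hi Hj.
  pose proof (is_lim_seq_le (fun _ => if Nat.eqb i j then 1 else 0) (mexp_partial n B t i j) _ _
    (fun N => partial_ge n B t i j N HB Ht Hi Hj) (is_lim_seq_const _)
    (proj2 (is_lim_seq_Reals _ _) (mexp_cv n B t i j))). simpl in H. exact H.
Qed.

Lemma mexp_shift n A t i j : 0 <= t -> (i < n)%nat -> (j < n)%nat ->
  mexp n A t i j = exp (- Mbound n A * t) * mexp n (shiftB n A) t i j.
Proof.
  intros Ht Hi Hj.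
  set (c := Mbound n A).
  pose proof (flow_repr n A (fun u l => exp (- c * u) * mexp n (shiftB n A) u i l)) as H.
  rewrite H; auto.
  - simpl. unfold vm. rewrite (rsum_ext n _ (fun l => ident i l * mexp n A t l j)).
    rewrite rsum_delta; auto. intros l Hl. rewrite Rmult_0_r, exp_0, Rmult_1_l, mexp_0. auto.
  - intros u k Hk.
    apply (dpl_eq (exp (- c * u) * (- c) * mexp n (shiftB n A) u i k +
                   exp (- c * u) * mmul n (mexp n (shiftB n A) u) (shiftB n A) i k)).
    apply (dpl_mult (fun u => exp (- c * u)) (fun u => mexp n (shiftB n A) u i k)).
    apply dpl_exp_lin. apply mexp_deriv_r; auto.
    unfold vm, mmul.
    rewrite (rsum_ext n (fun l => mexp n (shiftB n A) u i l * shiftB n A l k)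
       (fun l => mexp n (shiftB n A) u i l * A l k + c * (mexp n (shiftB n A) u i l * ident l k))).
    2:{ intros; unfold shiftB; fold c; ring. }
    rewrite rsum_plus, rsum_scal, rsum_delta_l; auto.
    rewrite (rsum_ext n (fun i0 => exp (- c * u) * mexp n (shiftB n A) u i i0 * A i0 k)
        (fun i0 => exp (- c * u) * (mexp n (shiftB n A) u i i0 * A i0 k))).
    2:{ intros; ring. }
    rewrite rsum_scal. ring.
Qed.

Lemma mexp_nonneg n A t : Metzler n A -> 0 <= t -> nonneg_mat n (mexp n A t).
Proof.
  intros HA Ht i j Hi Hj. rewrite mexp_shift; auto.
  apply Rmult_le_pos. left; apply exp_pos.
  pose proof (mexp_ge_B n (shiftB n A) t i j (shiftB_nonneg n A HA) Ht Hi Hj).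
  destruct (Nat.eqb i j); lra.
Qed.

Lemma mexp_diag_pos n A t j : Metzler n A -> 0 <= t -> (j < n)%nat -> 0 < mexp n A t j j.
Proof.
  intros HA Ht Hj. rewrite mexp_shift; auto.
  apply Rmult_lt_0_compat. apply exp_pos.
  pose proof (mexp_ge_B n (shiftB n A) t j j (shiftB_nonneg n A HA) Ht Hj Hj).
  rewrite Nat.eqb_refl in H. lra.
Qed.

Definition wsum {I : Type} (W : list (R * I)) (g : I -> R) : R :=
  fold_right (fun p acc => fst p * g (snd p) + acc) 0 W.

Lemma wsum_app {I} (W1 W2 : list (R * I)) g : wsum (W1 ++ W2) g = wsum W1 g + wsum W2 g.
Proof. induction W1; simpl; [lra|]. rewrite IHW1. lra. Qed.

Definition Gcert {I : Type} (n : nat) (F : nat -> I -> R) (L : list I) : Prop :=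
  exists W : list (R * I), (forall p, In p W -> 0 <= fst p /\ In (snd p) L) /\
    (exists p, In p W /\ 0 < fst p) /\ (forall i, (i < n)%nat -> wsum W (F i) = 0).

Definition Gsol {I : Type} (n : nat) (F : nat -> I -> R) (L : list I) : Prop :=
  exists lam : vec, forall j, In j L -> 0 < rsum n (fun i => lam i * F i j).

Lemma fold_min_le h0 Hs h : In h (h0 :: Hs) -> fold_right Rmin h0 Hs <= h.
Proof.
  revert h. induction Hs as [|a Hs IH]; simpl; intros h Hh.
  - destruct Hh as [<-|[]]. lra.
  - destruct Hh as [<-|[<-|Hh]].
    + specialize (IH h0 (or_introl eq_refl)). apply Rle_trans with (fold_right Rmin h0 Hs); auto. apply Rmin_r.
    + apply Rmin_l.
    + apply Rle_trans with (fold_right Rmin h0 Hs). apply Rmin_r. apply IH; simpl; auto.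
Qed.

Lemma fold_min_gt h0 Hs x : (forall h, In h (h0 :: Hs) -> x < h) -> x < fold_right Rmin h0 Hs.
Proof.
  induction Hs as [|a Hs IH]; simpl; intros Hx.
  - apply Hx; simpl; auto.
  - apply Rmin_glb_lt. apply Hx; simpl; auto. apply IH. intros h Hh. apply Hx. simpl in *. tauto.
Qed.

Lemma fold_max_ge l0 Ls l : In l (l0 :: Ls) -> l <= fold_right Rmax l0 Ls.
Proof.
  revert l. induction Ls as [|a Ls IH]; simpl; intros l Hl.
  - destruct Hl as [<-|[]]. lra.
  - destruct Hl as [<-|[<-|Hl]].
    + specialize (IH l0 (or_introl eq_refl)). apply Rle_trans with (fold_right Rmax l0 Ls); auto. apply Rmax_r.
    + apply Rmax_l.
    + apply Rle_trans with (fold_right Rmax l0 Ls). apply IH; simpl; auto. apply Rmax_r.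
Qed.

Lemma fold_max_in l0 Ls : In (fold_right Rmax l0 Ls) (l0 :: Ls).
Proof.
  induction Ls as [|a Ls IH]; simpl; auto.
  destruct (Rle_dec a (fold_right Rmax l0 Ls)) as [Hle|Hle].
  - rewrite Rmax_right by auto. simpl in IH |- *. tauto.
  - rewrite Rmax_left by lra. simpl. right; left; reflexivity.
Qed.

Lemma between_exists (Ls Hs : list R) :
  (forall l h, In l Ls -> In h Hs -> l < h) ->
  exists t, (forall l, In l Ls -> l < t) /\ (forall h, In h Hs -> t < h).
Proof.
  intros H.
  destruct Ls as [|l0 Ls'].
  - destruct Hs as [|h0 Hs'].
    + exists 0. split; intros ? [].
    + exists (fold_right Rmin h0 Hs' - 1). split. intros ? [].
      intros h Hh. pose proof (fold_min_le h0 Hs' h Hh). lra.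
  - set (M := fold_right Rmax l0 Ls').
    assert (HM : In M (l0 :: Ls')) by apply fold_max_in.
    destruct Hs as [|h0 Hs'].
    + exists (M + 1). split; [|intros ? []]. intros l Hl. pose proof (fold_max_ge l0 Ls' l Hl). unfold M. lra.
    + set (m := fold_right Rmin h0 Hs').
      assert (M < m). { apply fold_min_gt. intros h Hh. apply H; auto. }
      exists ((M + m) / 2). split.
      * intros l Hl. pose proof (fold_max_ge l0 Ls' l Hl). fold M in H1. lra.
      * intros h Hh. pose proof (fold_min_le h0 Hs' h Hh). fold m in H1. lra.
Qed.

Definition Gnext {I : Type} (n : nat) (F : nat -> I -> R) (i : nat) (k : (I * I) + I) : R :=
  match k with inl (p, q) => (- F n q) * F i p + F n p * F i q | inr z => F i z end.

Definition Glift {I : Type} (n : nat) (F : nat -> I -> R) (W : list (R * ((I * I) + I))) : list (R * I) :=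
  flat_map (fun wk => match snd wk with
                      | inl (p, q) => [(fst wk * (- F n q), p); (fst wk * F n p, q)]
                      | inr z => [(fst wk, z)] end) W.

Lemma wsum_lift {I} n (F : nat -> I -> R) W g :
  wsum (Glift n F W) g = wsum W (fun k => match k with inl (p, q) => (- F n q) * g p + F n p * g q | inr z => g z end).
Proof.
  induction W as [|[w k] W IH]; simpl; [lra|].
  destruct k as [[p q]|z]; simpl; rewrite IH; unfold Glift in IH; ring.
Qed.

Lemma wsum_zero {I} (W : list (R * I)) h : (forall p, In p W -> h (snd p) = 0) -> wsum W h = 0.
Proof. induction W; simpl; intros H; [lra|]. rewrite H by auto. rewrite IHW by auto. ring. Qed.

Definition posb (x : R) : bool := if Rlt_dec 0 x then true else false.
Definition negb' (x : R) : bool := if Rlt_dec x 0 then true else false.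
Definition zerb (x : R) : bool := if Req_EM_T x 0 then true else false.

Lemma posb_true x : posb x = true <-> 0 < x.
Proof. unfold posb. destruct (Rlt_dec 0 x); split; intros; auto; try discriminate; contradiction. Qed.
Lemma negb_true x : negb' x = true <-> x < 0.
Proof. unfold negb'. destruct (Rlt_dec x 0); split; intros; auto; try discriminate; contradiction. Qed.
Lemma zerb_true x : zerb x = true <-> x = 0.
Proof. unfold zerb. destruct (Req_EM_T x 0); split; intros; auto; try discriminate; contradiction. Qed.

Lemma div_order a b x y : 0 < a -> b < 0 -> 0 < - b * x + a * y -> - x / a < - y / b.
Proof.
  intros Ha Hb H.
  set (u := x / a). set (v := y / b).
  assert (Hx : x = u * a) by (unfold u; field; lra).
  assert (Hy : y = v * b) by (unfold v; field; lra).
  replace (- x / a) with (- u) by (unfold u; field; lra).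
  replace (- y / b) with (- v) by (unfold v; field; lra).
  rewrite Hx, Hy in H. assert (Hab : a * b < 0) by nra.
  destruct (Rlt_or_le (- u) (- v)) as [|Hc]; auto.
  assert (0 <= v - u) by lra.
  assert (0 <= -(a * b) * (v - u)) by (apply Rmult_le_pos; lra).
  nra.
Qed.

Theorem gordan n : forall (I : Type) (F : nat -> I -> R) (L : list I), Gsol n F L \/ Gcert n F L.
Proof.
  induction n; intros I F L.
  - destruct L as [|j L].
    + left. exists (fun _ => 0). intros j [].
    + right. exists [(1, j)]. split; [|split].
      * intros p [<-|[]]. simpl. split; [lra|auto].
      * exists (1, j). split; simpl; auto; lra.
      * intros i Hi. lia.
  - set (a := F n).
    set (pos := filter (fun j => posb (a j)) L).
    set (neg := filter (fun j => negb' (a j)) L).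
    set (zer := filter (fun j => zerb (a j)) L).
    set (L' := flat_map (fun p => map (fun q => @inl (I * I) I (p, q)) neg) pos ++ map inr zer).
    assert (HL' : forall k, In k L' -> match k with
               | inl (p, q) => In p L /\ 0 < a p /\ In q L /\ a q < 0
               | inr z => In z L /\ a z = 0 end).
    { intros k Hk. unfold L' in Hk. apply in_app_or in Hk. destruct Hk as [Hk|Hk].
      - apply in_flat_map in Hk. destruct Hk as [p [Hp Hk]]. apply in_map_iff in Hk.
        destruct Hk as [q [<- Hq]]. unfold pos, neg in *. apply filter_In in Hp, Hq.
        rewrite posb_true in Hp. rewrite negb_true in Hq. tauto.
      - apply in_map_iff in Hk. destruct Hk as [z [<- Hz]]. unfold zer in Hz. apply filter_In in Hz.
        rewrite zerb_true in Hz. tauto. }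
    destruct (IHn _ (Gnext n F) L') as [[lam' Hlam']|[W' [HW1 [HW2 HW3]]]].
    +
      set (r := fun j => rsum n (fun i => lam' i * F i j)).
      assert (Hpair : forall p q, In p pos -> In q neg -> 0 < - a q * r p + a p * r q).
      { intros p q Hp Hq. 
        assert (HIn : In (inl (p, q)) L').
        { unfold L'. apply in_or_app. left. apply in_flat_map. exists p. split; auto.
          apply in_map_iff. exists q. auto. }
        specialize (Hlam' _ HIn). unfold Gnext in Hlam'. unfold r.
        rewrite <- !rsum_scal, <- rsum_plus. 
        replace (rsum n (fun i => - a q * (lam' i * F i p) + a p * (lam' i * F i q))) with
          (rsum n (fun i => lam' i * (- F n q * F i p + F n p * F i q))). auto.
        apply rsum_ext. intros. unfold a. ring. }
      assert (Hz : forall z, In z zer -> 0 < r z).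
      { intros z Hz. assert (HIn : In (inr z) L').
        { unfold L'. apply in_or_app. right. apply in_map. auto. }
        apply (Hlam' _ HIn). }
      destruct (between_exists (map (fun p => - r p / a p) pos) (map (fun q => - r q / a q) neg))
        as [t [Ht1 Ht2]].
      { intros l h Hl Hh. apply in_map_iff in Hl, Hh. destruct Hl as [p [<- Hp]]. destruct Hh as [q [<- Hq]].
        pose proof (Hpair p q Hp Hq).
        unfold pos, neg in Hp, Hq. apply filter_In in Hp, Hq. rewrite posb_true in Hp. rewrite negb_true in Hq.
        apply div_order; tauto. }
      left. exists (fun i => if Nat.eqb i n then t else lam' i).
      intros j Hj. simpl.
      rewrite (rsum_ext n _ (fun i => lam' i * F i j)).
      2:{ intros i Hi. replace (Nat.eqb i n) with false; auto. symmetry; apply Nat.eqb_neq; lia. }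
      rewrite Nat.eqb_refl. fold (r j). fold (a j).
      destruct (Rtotal_order (a j) 0) as [Hn|[H0|Hp]].
      * assert (In j neg) by (unfold neg; apply filter_In; rewrite negb_true; auto).
        specialize (Ht2 (- r j / a j) (in_map _ _ _ H)).
        assert (a j * t > a j * (- r j / a j)) by (apply Rmult_lt_gt_compat_neg_l; auto).
        replace (a j * (- r j / a j)) with (- r j) in H0 by (field; lra). lra.
      * assert (In j zer) by (unfold zer; apply filter_In; rewrite zerb_true; auto).
        rewrite H0. specialize (Hz j H). lra.
      * assert (In j pos) by (unfold pos; apply filter_In; rewrite posb_true; auto).
        specialize (Ht1 (- r j / a j) (in_map _ _ _ H)).
        assert (- r j / a j * a j < t * a j) by (apply Rmult_lt_compat_r; auto).
        replace (- r j / a j * a j) with (- r j) in H0 by (field; lra). lra.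
    +
      right. exists (Glift n F W'). split; [|split].
      * intros p Hp. unfold Glift in Hp. apply in_flat_map in Hp. destruct Hp as [[w k] [Hwk Hp]].
        destruct (HW1 _ Hwk) as [Hw Hk]. simpl in Hw, Hk. specialize (HL' k Hk).
        simpl in Hp. destruct k as [[p' q']|z].
        -- destruct Hp as [<-|[<-|[]]]; simpl; split; try tauto; fold a; nra.
        -- destruct Hp as [<-|[]]; simpl; split; tauto.
      * destruct HW2 as [[w k] [Hwk Hw]]. simpl in Hw. destruct (HW1 _ Hwk) as [_ Hk].
        specialize (HL' k Hk). destruct k as [[p q]|z].
        -- exists (w * (- F n q), p). split. unfold Glift. apply in_flat_map. exists (w, inl (p, q)).
           split; simpl; auto. simpl. fold a. nra.
        -- exists (w, z). split; auto. unfold Glift. apply in_flat_map. exists (w, inr z). simpl; auto.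
      * intros i Hi. rewrite wsum_lift.
        destruct (Nat.eq_dec i n) as [->|Hne].
        -- apply wsum_zero. intros [w k] Hwk. destruct (HW1 _ Hwk) as [_ Hk]. simpl in Hk.
           specialize (HL' k Hk). simpl. destruct k as [[p q]|z]. ring. fold a. tauto.
        -- rewrite <- (HW3 i ltac:(lia)). unfold wsum. f_equal.
Qed.

Lemma dpl_vmE_l n A c t j :
  derivable_pt_lim (fun s => vm n c (mexp n A s) j) t (vm n (vm n c A) (mexp n A t) j).
Proof.
  unfold vm at 1.
  apply (dpl_eq (rsum n (fun l => c l * mmul n A (mexp n A t) l j))).
  - apply (dpl_rsum n (fun l s => c l * mexp n A s l j)). intros l Hl.
    apply (dpl_eq (0 * mexp n A t l j + c l * mmul n A (mexp n A t) l j)); [|ring].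
    apply (dpl_mult (fun _ => c l) (fun s => mexp n A s l j)). apply dpl_const.
    apply mexp_deriv_l.
  - unfold mmul. fold (vm n c (mmul n A (mexp n A t)) j). apply vm_mmul.
Qed.

Lemma row_decr n A v s j : Metzler n A -> vnonpos n (vm n v A) -> 0 <= s -> (j < n)%nat ->
  vm n v (mexp n A s) j <= v j.
Proof.
  intros HA Hv Hs Hj.
  assert (H0 : vm n v (mexp n A 0) j = v j).
  { unfold vm. rewrite (rsum_ext n _ (fun i => v i * ident i j)). apply rsum_delta_l; auto.
    intros. rewrite mexp_0. auto. }
  rewrite <- H0.
  apply (deriv_nonpos_decr (fun s => vm n v (mexp n A s) j) (fun t => vm n (vm n v A) (mexp n A t) j) 0 s Hs).
  - intros. apply dpl_vmE_l.
  - intros c Hc. unfold vm at 1. rewrite <- (rsum_zero n). apply rsum_le. intros i Hi.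
    pose proof (Hv i Hi). pose proof (mexp_nonneg n A c HA ltac:(lra) i j Hi Hj). 
    assert (0 <= - vm n v A i * mexp n A c i j) by (apply Rmult_le_pos; lra). lra.
Qed.

Lemma vm_pos_strict n d M j : nonneg_mat n M -> (j < n)%nat -> 0 < M j j ->
  (forall i, (i < n)%nat -> 0 <= d i) -> 0 < d j -> 0 < vm n d M j.
Proof.
  intros HM Hj Hjj Hd Hdj. unfold vm.
  eapply Rlt_le_trans. 2: apply (rsum_ge_term n (fun i => d i * M i j) j); auto.
  apply Rmult_lt_0_compat; auto.
  intros. apply Rmult_le_pos. apply Hd; auto. apply HM; auto.
Qed.

Lemma pos_lower_bound m (f : nat -> R) : (forall i, (i < m)%nat -> 0 < f i) ->
  exists c, 0 < c /\ forall i, (i < m)%nat -> c <= f i.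
Proof.
  induction m; intros H.
  - exists 1. split. lra. intros; lia.
  - destruct (IHm ltac:(intros; apply H; lia)) as [c [Hc Hci]].
    exists (Rmin c (f m)). split. { apply Rmin_glb_lt; auto. } 
    intros i Hi. destruct (Nat.eq_dec i m). subst. apply Rmin_r.
    eapply Rle_trans. apply Rmin_l. apply Hci. lia.
Qed.

Lemma vm_ident n l j : (j < n)%nat -> vm n l ident j = l j.
Proof. intros. unfold vm. apply rsum_delta_l; auto. Qed.

Lemma vm_linear n (a : R) u w M j : vm n (fun i => a * u i + w i) M j = a * vm n u M j + vm n w M j.
Proof. unfold vm. rewrite <- rsum_scal, <- rsum_plus. apply rsum_ext. intros; ring. Qed.

Lemma dot_ext n l1 l2 x1 x2 : (forall i, (i < n)%nat -> l1 i * x1 i = l2 i * x2 i) -> dot n l1 x1 = dot n l2 x2.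
Proof. intros. unfold dot. apply rsum_ext. auto. Qed.

Lemma dot_JE n lam J E x : dot n lam (mv n J (mv n E x)) = dot n (vm n lam (mmul n J E)) x.
Proof.
  rewrite dot_mv, dot_mv. apply dot_ext. intros i Hi. rewrite vm_mmul. auto.
Qed.

Lemma vm_JE_nonneg n A J lam t j : Metzler n A -> nonneg_mat n J -> vpos n lam -> 0 <= t -> (j < n)%nat ->
  0 <= vm n lam (mmul n J (mexp n A t)) j.
Proof.
  intros HA HJ Hl Ht Hj. unfold vm. apply rsum_nonneg. intros i Hi. apply Rmult_le_pos. left; apply Hl; auto.
  unfold mmul. apply rsum_nonneg. intros k Hk. apply Rmult_le_pos. apply HJ; auto. apply mexp_nonneg; auto.
Qed.

Lemma vm_JE_shift n A J lam T s j : 0 <= s -> (j < n)%nat ->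
  vm n lam (mmul n J (mexp n A (T + s))) j = vm n (vm n lam (mmul n J (mexp n A T))) (mexp n A s) j.
Proof.
  intros Hs Hj. rewrite <- vm_mmul. unfold vm. apply rsum_ext. intros i Hi. f_equal.
  rewrite mmul_assoc. unfold mmul at 1 3. apply rsum_ext. intros k Hk. f_equal.
  apply mexp_semigroup; auto.
Qed.


Lemma impl_a_b n A J Tbar :
  (exists lam mu nu : vec, vpos n lam /\ vpos n mu /\ vpos n nu /\
        (forall x, vnonneg n x -> dot n lam (mv n A x) <= - dot n mu x) /\
        (forall x theta, vnonneg n x -> Tbar <= theta ->
           dot n lam (mv n J (mv n (mexp n A theta) x)) - dot n lam x
             <= - dot n nu x)) ->
  (exists lam : vec, vpos n lam /\ vneg n (vm n lam A) /\
        (forall theta, Tbar <= theta ->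
           vneg n (fun j => vm n lam (mmul n J (mexp n A theta)) j - lam j))).
Proof.
  intros [lam [mu [nu [Hl [Hm [Hn [H1 H2]]]]]]].
  exists lam. split; auto. split.
  - intros j Hj. specialize (H1 (evec j) (evec_nonneg n j)).
    rewrite dot_mv, !dot_evec in H1 by auto. pose proof (Hm j Hj). lra.
  - intros theta Ht j Hj. specialize (H2 (evec j) theta (evec_nonneg n j) Ht).
    rewrite dot_JE, !dot_evec in H2 by auto. pose proof (Hn j Hj). simpl. lra.
Qed.

Lemma impl_c_a n A J Tbar : Metzler n A -> nonneg_mat n J -> 0 < Tbar ->
  (exists lam : vec, vpos n lam /\ vneg n (vm n lam A) /\
        vneg n (fun j => vm n lam (mmul n J (mexp n A Tbar)) j - lam j)) ->
  (exists lam mu nu : vec, vpos n lam /\ vpos n mu /\ vpos n nu /\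
        (forall x, vnonneg n x -> dot n lam (mv n A x) <= - dot n mu x) /\
        (forall x theta, vnonneg n x -> Tbar <= theta ->
           dot n lam (mv n J (mv n (mexp n A theta) x)) - dot n lam x
             <= - dot n nu x)).
Proof.
  intros HA HJ HT [lam [Hl [HlA Hc]]].
  set (w := vm n lam (mmul n J (mexp n A Tbar))).
  destruct (pos_lower_bound n (fun j => (lam j - w j) / lam j)) as [c0 [Hc0 Hcj]].
  { intros i Hi. pose proof (Hc i Hi). simpl in H. pose proof (Hl i Hi). unfold Rdiv.
    apply Rmult_lt_0_compat. unfold w. lra. apply Rinv_0_lt_compat; auto. }
  set (c := Rmin c0 1).
  assert (Hcpos : 0 < c) by (unfold c; apply Rmin_glb_lt; lra).
  assert (Hc1 : c <= 1) by apply Rmin_r.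
  assert (Hcc0 : c <= c0) by apply Rmin_l.
  assert (Hw : forall j, (j < n)%nat -> w j <= (1 - c) * lam j).
  { intros j Hj. pose proof (Hcj j Hj). pose proof (Hl j Hj). 
    assert (c0 * lam j <= lam j - w j).
    { replace (lam j - w j) with ((lam j - w j) / lam j * lam j) by (field; lra).
      apply Rmult_le_compat_r; lra. } nra. }
  exists lam, (fun j => - vm n lam A j), (fun j => c * lam j).
  split; auto. split. { intros j Hj. pose proof (HlA j Hj). lra. }
  split. { intros j Hj. pose proof (Hl j Hj). nra. }
  split.
  - intros x Hx. rewrite dot_mv. unfold dot.
    rewrite (rsum_ext n (fun i => - vm n lam A i * x i) (fun i => -1 * (vm n lam A i * x i))) by (intros; ring).
    rewrite rsum_scal. lra.
  - intros x theta Hx Ht. rewrite dot_JE.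
    assert (Hb : forall j, (j < n)%nat -> vm n lam (mmul n J (mexp n A theta)) j <= (1 - c) * lam j).
    { intros j Hj. replace theta with (Tbar + (theta - Tbar)) by ring.
      rewrite vm_JE_shift by (auto; lra). fold w.
      eapply Rle_trans. apply (vm_mono n w (fun i => (1 - c) * lam i) (mexp n A (theta - Tbar))); auto.
      apply mexp_nonneg; auto; lra.
      unfold vm. rewrite (rsum_ext n (fun i => (1 - c) * lam i * mexp n A (theta - Tbar) i j)
        (fun i => (1 - c) * (lam i * mexp n A (theta - Tbar) i j))) by (intros; ring).
      rewrite rsum_scal. fold (vm n lam (mexp n A (theta - Tbar)) j).
      apply Rmult_le_compat_l. lra. apply row_decr; auto. intros i Hi. pose proof (HlA i Hi); lra. lra. }
    assert (E1 : dot n (fun j => (1 - c) * lam j) x = dot n lam x - dot n (fun j => c * lam j) x).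
    { unfold dot. rewrite <- rsum_minus. apply rsum_ext. intros; ring. }
    pose proof (dot_mono_l n _ _ x Hx Hb). lra.
Qed.

Lemma vm_msub_ident n lam M j : (j < n)%nat -> vm n lam (msub M ident) j = vm n lam M j - lam j.
Proof. intros Hj. unfold msub. unfold vm. rewrite (rsum_ext n _ (fun i => lam i * M i j - lam i * ident i j)).
  rewrite rsum_minus. rewrite rsum_delta_l; auto. intros; ring. Qed.

Lemma impl_c_d n A J Tbar :
  (exists lam : vec, vpos n lam /\ vneg n (vm n lam A) /\
        vneg n (fun j => vm n lam (mmul n J (mexp n A Tbar)) j - lam j)) <->
  (exists lam : vec, vpos n lam /\ vneg n (vm n lam A) /\
        vneg n (vm n lam (msub (mmul n J (mexp n A Tbar)) ident))).
Proof.
  split; intros [lam [H1 [H2 H3]]]; exists lam; split; auto; split; auto; intros j Hj;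
    specialize (H3 j Hj); rewrite ?vm_msub_ident in * by auto; auto.
Qed.

Lemma rsum_zero_nonneg m f : (forall j, (j < m)%nat -> 0 <= f j) -> rsum m f = 0 ->
  forall j, (j < m)%nat -> f j = 0.
Proof. intros Hf Hs j Hj. pose proof (rsum_ge_term m f j Hf Hj). pose proof (Hf j Hj). lra. Qed.

Lemma blockK_col n A M lam j : (j < 3 * n)%nat ->
  rsum n (fun i => lam i * blockK n A M i j) =
  if Nat.ltb j n then lam j
  else if Nat.ltb j (2 * n) then - vm n lam A (j - n)%nat
  else - vm n lam M (j - 2 * n)%nat.
Proof.
  intros Hj. unfold blockK.
  destruct (Nat.ltb j n) eqn:E1.
  - apply rsum_delta_l. apply Nat.ltb_lt; auto.
  - destruct (Nat.ltb j (2 * n)) eqn:E2.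
    + unfold vm. rewrite (rsum_ext n _ (fun i => -1 * (lam i * A i (j - n)%nat))) by (intros; ring).
      rewrite rsum_scal. ring.
    + unfold vm. rewrite (rsum_ext n _ (fun i => -1 * (lam i * M i (j - 2 * n)%nat))) by (intros; ring).
      rewrite rsum_scal. ring.
Qed.

Lemma impl_d_e n A M :
  (exists lam : vec, vpos n lam /\ vneg n (vm n lam A) /\ vneg n (vm n lam M)) ->
  (forall y : vec, vnonneg (3 * n) y ->
        (forall i, (i < n)%nat -> rsum (3 * n) (fun j => blockK n A M i j * y j) = 0) ->
        forall j, (j < 3 * n)%nat -> y j = 0).
Proof.
  intros [lam [H1 [H2 H3]]] y Hy Hk.
  set (c := fun j => rsum n (fun i => lam i * blockK n A M i j)).
  assert (Hc : forall j, (j < 3 * n)%nat -> 0 < c j).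
  { intros j Hj. unfold c. rewrite blockK_col by auto.
    destruct (Nat.ltb j n) eqn:E1. apply H1. apply Nat.ltb_lt; auto.
    apply Nat.ltb_ge in E1.
    destruct (Nat.ltb j (2 * n)) eqn:E2. apply Nat.ltb_lt in E2.
    pose proof (H2 (j - n)%nat ltac:(lia)). lra.
    apply Nat.ltb_ge in E2. pose proof (H3 (j - 2 * n)%nat ltac:(lia)). lra. }
  assert (Hsum : rsum (3 * n) (fun j => c j * y j) = 0).
  { unfold c. rewrite (rsum_ext (3 * n) _ (fun j => rsum n (fun i => lam i * (blockK n A M i j * y j)))).
    2:{ intros. rewrite <- rsum_scal_r. apply rsum_ext. intros; ring. }
    rewrite <- rsum_swap. rewrite (rsum_ext n _ (fun _ => 0)). apply rsum_zero.
    intros i Hi. rewrite rsum_scal. rewrite Hk; auto. ring. }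
  intros j Hj.
  pose proof (rsum_zero_nonneg (3 * n) (fun j => c j * y j)
    ltac:(intros; apply Rmult_le_pos; [left; apply Hc; auto | apply Hy; auto]) Hsum j Hj).
  simpl in H. pose proof (Hc j Hj). 
  destruct (Rmult_integral _ _ H); lra.
Qed.

Lemma rsum_wsum m (f : nat -> R) (W : list (R * nat)) (g : nat -> nat -> R) :
  rsum m (fun j => f j * wsum W (fun k => g k j)) = wsum W (fun k => rsum m (fun j => f j * g k j)).
Proof.
  induction W as [|[w k] W IH]; simpl.
  - rewrite (rsum_ext m _ (fun _ => 0)). apply rsum_zero. intros; ring.
  - rewrite <- IH. rewrite <- rsum_scal, <- rsum_plus. apply rsum_ext. intros; ring.
Qed.

Lemma wsum_ext {I} (W : list (R * I)) h1 h2 : (forall p, In p W -> h1 (snd p) = h2 (snd p)) ->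
  wsum W h1 = wsum W h2.
Proof. induction W; simpl; intros H; auto. rewrite H, IHW; auto. Qed.

Lemma wsum_ge_term {I} (W : list (R * I)) h p0 : (forall p, In p W -> 0 <= fst p * h (snd p)) ->
  In p0 W -> fst p0 * h (snd p0) <= wsum W h.
Proof.
  induction W as [|p W IH]; simpl; intros H Hp. contradiction.
  assert (0 <= wsum W h).
  { clear IH Hp. induction W; simpl. lra. pose proof (H a (or_intror (or_introl eq_refl))).
    assert (0 <= wsum W h). apply IHW. intros; apply H. simpl in *; tauto. lra. }
  destruct Hp as [<-|Hp]. lra. pose proof (H p (or_introl eq_refl)). pose proof (IH ltac:(auto) Hp). lra.
Qed.

Lemma impl_e_d n A M :
  (forall y : vec, vnonneg (3 * n) y ->
        (forall i, (i < n)%nat -> rsum (3 * n) (fun j => blockK n A M i j * y j) = 0) ->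
        forall j, (j < 3 * n)%nat -> y j = 0) ->
  (exists lam : vec, vpos n lam /\ vneg n (vm n lam A) /\ vneg n (vm n lam M)).
Proof.
  intros He.
  destruct (gordan n nat (blockK n A M) (seq 0 (3 * n))) as [[lam Hl]|[W [HW1 [[p0 [Hp0 Hp0pos]] HW3]]]].
  - exists lam. split; [|split].
    + intros j Hj. specialize (Hl j ltac:(apply in_seq; lia)). rewrite blockK_col in Hl by lia.
      replace (Nat.ltb j n) with true in Hl by (symmetry; apply Nat.ltb_lt; auto). auto.
    + intros j Hj. specialize (Hl (n + j)%nat ltac:(apply in_seq; lia)). rewrite blockK_col in Hl by lia.
      replace (Nat.ltb (n + j) n) with false in Hl by (symmetry; apply Nat.ltb_ge; lia).
      replace (Nat.ltb (n + j) (2 * n)) with true in Hl by (symmetry; apply Nat.ltb_lt; lia).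
      replace (n + j - n)%nat with j in Hl by lia. lra.
    + intros j Hj. specialize (Hl (2 * n + j)%nat ltac:(apply in_seq; lia)). rewrite blockK_col in Hl by lia.
      replace (Nat.ltb (2 * n + j) n) with false in Hl by (symmetry; apply Nat.ltb_ge; lia).
      replace (Nat.ltb (2 * n + j) (2 * n)) with false in Hl by (symmetry; apply Nat.ltb_ge; lia).
      replace (2 * n + j - 2 * n)%nat with j in Hl by lia. lra.
  - exfalso.
    set (y := fun j => wsum W (fun k => if Nat.eqb k j then 1 else 0)).
    assert (Hy : vnonneg (3 * n) y).
    { intros j Hj. unfold y. induction W as [|q W IH]; simpl. lra.
      assert (0 <= fst q * (if Nat.eqb (snd q) j then 1 else 0)).
      { destruct (HW1 q (or_introl eq_refl)). destruct (Nat.eqb (snd q) j); nra. }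
      assert (0 <= wsum W (fun k => if Nat.eqb k j then 1 else 0)).
      { clear Hp0 HW3 IH. induction W as [|q' W IH']; simpl. lra.
        assert (0 <= fst q' * (if Nat.eqb (snd q') j then 1 else 0)).
        { destruct (HW1 q' (or_intror (or_introl eq_refl))). destruct (Nat.eqb (snd q') j); nra. }
        assert (0 <= wsum W (fun k => if Nat.eqb k j then 1 else 0)).
        { apply IH'. intros p Hp. apply HW1. simpl in *; tauto. } lra. }
      lra. }
    assert (Hk : forall i, (i < n)%nat -> rsum (3 * n) (fun j => blockK n A M i j * y j) = 0).
    { intros i Hi. unfold y. rewrite (rsum_wsum (3 * n) (blockK n A M i) W (fun k j => if Nat.eqb k j then 1 else 0)).
      transitivity (wsum W (blockK n A M i)); [|apply HW3; auto]. apply wsum_ext. intros p Hp.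
      destruct (HW1 p Hp) as [_ Hin]. apply in_seq in Hin.
      rewrite (rsum_ext (3 * n) _ (fun j => ident (snd p) j * blockK n A M i j)).
      apply (rsum_delta (3 * n) (snd p) (blockK n A M i)). lia.
      intros j Hj. unfold ident. destruct (Nat.eqb (snd p) j); ring. }
    destruct (HW1 p0 Hp0) as [_ Hin]. apply in_seq in Hin.
    pose proof (He y Hy Hk (snd p0) ltac:(lia)) as Hy0.
    unfold y in Hy0.
    pose proof (wsum_ge_term W (fun k => if Nat.eqb k (snd p0) then 1 else 0) p0) as Hge.
    cbv beta in Hge. rewrite Nat.eqb_refl in Hge.
    assert (fst p0 * 1 <= 0).
    { rewrite <- Hy0. apply Hge; auto. intros p Hp. destruct (HW1 p Hp). destruct (Nat.eqb (snd p) (snd p0)); nra. }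
    lra.
Qed.

Definition Iab (a b : R) : R -> Prop := fun s => a <= s <= b.

Lemma hdo_interior a b f df tau : has_deriv_on a b f df -> a < tau < b ->
  derivable_pt_lim f tau (df tau).
Proof.
  intros H Ht eps Heps.
  destruct (H tau ltac:(lra) eps Heps) as [d [Hd Hs]].
  assert (Hpos : 0 < Rmin d (Rmin (tau - a) (b - tau))) by (repeat apply Rmin_pos; lra).
  exists (mkposreal _ Hpos). intros h Hh0 Hh. simpl in Hh.
  pose proof (Rmin_l d (Rmin (tau - a) (b - tau))). pose proof (Rmin_r d (Rmin (tau - a) (b - tau))).
  pose proof (Rmin_l (tau - a) (b - tau)). pose proof (Rmin_r (tau - a) (b - tau)).
  apply Rabs_def2 in Hh as [Hh1 Hh2].
  specialize (Hs (tau + h)). replace (tau + h - tau) with h in Hs by ring.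
  apply Hs. lra. split. apply Rabs_pos_lt; auto. apply Rabs_def1; lra.
Qed.

Lemma hdo_cw a b f df x : has_deriv_on a b f df -> a <= x <= b -> limit1_in f (Iab a b) (f x) x.
Proof.
  intros H Hx eps Heps.
  destruct (H x Hx 1 ltac:(lra)) as [d [Hd Hs]].
  set (K := Rabs (df x) + 1).
  assert (HK : 0 < K) by (unfold K; pose proof (Rabs_pos (df x)); lra).
  exists (Rmin d (eps / K)). split. apply Rmin_pos; auto. apply Rdiv_lt_0_compat; auto.
  intros s [Hs1 Hs2]. simpl in *. unfold R_dist in *.
  pose proof (Rmin_l d (eps / K)). pose proof (Rmin_r d (eps / K)).
  destruct (Req_dec s x) as [->|Hne]. { replace (f x - f x) with 0 by ring. rewrite Rabs_R0. lra. }
  assert (Hpos : 0 < Rabs (s - x)) by (apply Rabs_pos_lt; lra).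
  specialize (Hs s Hs1 ltac:(split; lra)).
  assert (Hq : Rabs ((f s - f x) / (s - x)) <= K).
  { unfold K. pose proof (Rabs_triang_inv ((f s - f x) / (s - x)) (df x)). lra. }
  replace (f s - f x) with ((f s - f x) / (s - x) * (s - x)) by (field; intro; apply Hne; lra).
  rewrite Rabs_mult.
  assert (Rabs ((f s - f x) / (s - x)) * Rabs (s - x) <= K * Rabs (s - x)).
  { apply Rmult_le_compat_r. apply Rabs_pos. auto. }
  assert (K * Rabs (s - x) < K * (eps / K)). { apply Rmult_lt_compat_l; auto. lra. }
  replace (K * (eps / K)) with eps in H3 by (field; lra). lra.
Qed.

Lemma cont_cw f D x : continuity_pt f x -> limit1_in f D (f x) x.
Proof.
  intros H eps Heps. destruct (H eps Heps) as [d [Hd Hs]].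
  exists d. split; auto. intros s [_ Hs2].
  destruct (Req_dec x s) as [->|Hne].
  - simpl. unfold R_dist. replace (f s - f s) with 0 by ring. rewrite Rabs_R0. lra.
  - apply Hs. split; auto. split; auto. exact I.
Qed.

Lemma cw_const c D x : limit1_in (fun _ => c) D c x.
Proof. intros eps Heps. exists 1. split. lra. intros. simpl. unfold R_dist. replace (c - c) with 0 by ring.
  rewrite Rabs_R0. lra. Qed.

Lemma cw_rsum m (f : nat -> R -> R) D x : (forall l, (l < m)%nat -> limit1_in (f l) D (f l x) x) ->
  limit1_in (fun s => rsum m (fun l => f l s)) D (rsum m (fun l => f l x)) x.
Proof.
  induction m; intros H; simpl.
  - apply cw_const.
  - apply (limit_plus (fun s => rsum m (fun l => f l s)) (f m)). apply IHm. intros; apply H; lia. apply H; lia.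
Qed.

Lemma mono_lemma a b f df : a < b ->
  limit1_in f (Iab a b) (f a) a -> limit1_in f (Iab a b) (f b) b ->
  (forall tau, a < tau < b -> derivable_pt_lim f tau (df tau)) ->
  (forall tau, a < tau < b -> 0 <= df tau) -> f a <= f b.
Proof.
  intros Hab Ha Hb Hd Hn.
  destruct (Rle_or_lt (f a) (f b)) as [|Hlt]; auto. exfalso.
  set (eta := (f a - f b) / 3).
  assert (Heta : eta > 0) by (unfold eta; lra).
  destruct (Ha eta Heta) as [da [Hda Ha']]. destruct (Hb eta Heta) as [db [Hdb Hb']].
  set (h := Rmin (Rmin da db) ((b - a) / 3) / 2).
  assert (Hh : 0 < h). { unfold h. apply Rdiv_lt_0_compat; [|lra]. repeat apply Rmin_pos; lra. }
  assert (Hh1 : h < da). { unfold h. pose proof (Rmin_l (Rmin da db) ((b - a) / 3)). pose proof (Rmin_l da db). lra. }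
  assert (Hh2 : h < db). { unfold h. pose proof (Rmin_l (Rmin da db) ((b - a) / 3)). pose proof (Rmin_r da db). lra. }
  assert (Hh3 : h < (b - a) / 3). { unfold h. pose proof (Rmin_r (Rmin da db) ((b - a) / 3)). lra. }
  specialize (Ha' (a + h)). specialize (Hb' (b - h)). simpl in Ha', Hb'. unfold R_dist in Ha', Hb'.
  assert (H1 : Rabs (f (a + h) - f a) < eta).
  { apply Ha'. split. unfold Iab; lra. replace (a + h - a) with h by ring. rewrite Rabs_right; lra. }
  assert (H2 : Rabs (f (b - h) - f b) < eta).
  { apply Hb'. split. unfold Iab; lra. replace (b - h - b) with (- h) by ring. rewrite Rabs_Ropp, Rabs_right; lra. }
  destruct (MVT_cor2 f df (a + h) (b - h) ltac:(lra)) as [c [Hc1 Hc2]].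
  { intros c Hc. apply Hd. lra. }
  pose proof (Hn c ltac:(lra)).
  assert (0 <= df c * (b - h - (a + h))) by (apply Rmult_le_pos; lra).
  apply Rabs_def2 in H1. apply Rabs_def2 in H2. unfold eta in *. lra.
Qed.

Lemma dpl_to_hdo a b f df : (forall tau, a <= tau <= b -> derivable_pt_lim f tau (df tau)) ->
  has_deriv_on a b f df.
Proof.
  intros H tau Ht eps Heps. destruct (H tau Ht eps Heps) as [d Hd].
  exists d. split. apply cond_pos. intros s Hs [Hs1 Hs2].
  specialize (Hd (s - tau)). replace (tau + (s - tau)) with s in Hd by ring.
  apply Hd. intro E. rewrite E in Hs1. rewrite Rabs_R0 in Hs1. lra. auto.
Qed.

Lemma mexp_cont_comp n A (g : R -> R) i j x : continuity_pt g x -> continuity_pt (fun s => mexp n A (g s) i j) x.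
Proof.
  intros Hg. apply (continuity_pt_comp g (fun v => mexp n A v i j)); auto. apply mexp_cont.
Qed.

Lemma dpl_mexp_rev n A T i j tau :
  derivable_pt_lim (fun s => mexp n A (T - s) i j) tau (- mmul n A (mexp n A (T - tau)) i j).
Proof.
  apply (dpl_eq (mmul n A (mexp n A (T - tau)) i j * (0 - 1))); [|ring].
  apply (dpl_comp (fun s => T - s) (fun v => mexp n A v i j)).
  apply (dpl_minus (fun _ => T) (fun s => s)). apply dpl_const. apply dpl_id.
  apply mexp_deriv_l.
Qed.

Lemma vm_AE n A v E j : rsum n (fun i => v i * mmul n A E i j) = vm n (vm n v A) E j.
Proof. fold (vm n v (mmul n A E) j). apply vm_mmul. Qed.

Lemma cont_of_dpl f x l : derivable_pt_lim f x l -> continuity_pt f x.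
Proof. intros H. apply derivable_continuous_pt. exists l. exact H. Qed.

Lemma impl_f_c n A J Tbar : Metzler n A -> nonneg_mat n J -> 0 < Tbar ->
  (exists (zeta dzeta : R -> vec) (eps : R),
        vdiff_on n 0 Tbar zeta dzeta /\ vpos n (zeta Tbar) /\ 0 < eps /\
        vneg n (vm n (zeta Tbar) A) /\
        (forall tau, 0 <= tau <= Tbar ->
           vnonpos n (fun j => vm n (zeta tau) A j - dzeta tau j)) /\
        vnonpos n (fun j => vm n (zeta Tbar) J j - zeta 0 j + eps)) ->
  (exists lam : vec, vpos n lam /\ vneg n (vm n lam A) /\
        vneg n (fun j => vm n lam (mmul n J (mexp n A Tbar)) j - lam j)).
Proof.
  intros HA HJ HT [z [dz [eps [Hd [Hpos [Heps [HzA [Hmid Hend]]]]]]]].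
  assert (Hcomp : forall j, (j < n)%nat -> vm n (z 0) (mexp n A Tbar) j <= z Tbar j).
  { intros j Hj.
    set (phi := fun tau => rsum n (fun i => z tau i * mexp n A (Tbar - tau) i j)).
    assert (E0 : phi 0 = vm n (z 0) (mexp n A Tbar) j).
    { unfold phi, vm. apply rsum_ext. intros. rewrite Rminus_0_r. auto. }
    assert (ET : phi Tbar = z Tbar j).
    { unfold phi. rewrite (rsum_ext n _ (fun i => z Tbar i * ident i j)). apply rsum_delta_l; auto.
      intros. rewrite Rminus_diag, mexp_0. auto. }
    rewrite <- E0, <- ET.
    apply (mono_lemma 0 Tbar phi (fun tau => rsum n (fun i => dz tau i * mexp n A (Tbar - tau) i j +
                 z tau i * (- mmul n A (mexp n A (Tbar - tau)) i j)))); auto.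
    - unfold phi. apply (cw_rsum n (fun i tau => z tau i * mexp n A (Tbar - tau) i j)). intros i Hi. cbv beta.
      apply (limit_mul (fun tau => z tau i) (fun tau => mexp n A (Tbar - tau) i j)).
      apply (hdo_cw 0 Tbar (fun tau => z tau i) (fun tau => dz tau i) 0 (Hd i Hi)). lra.
      apply cont_cw. eapply cont_of_dpl. apply dpl_mexp_rev.
    - unfold phi. apply (cw_rsum n (fun i tau => z tau i * mexp n A (Tbar - tau) i j)). intros i Hi. cbv beta.
      apply (limit_mul (fun tau => z tau i) (fun tau => mexp n A (Tbar - tau) i j)).
      apply (hdo_cw 0 Tbar (fun tau => z tau i) (fun tau => dz tau i) Tbar (Hd i Hi)). lra.
      apply cont_cw. eapply cont_of_dpl. apply dpl_mexp_rev.
    - intros tau Htau. unfold phi. apply (dpl_rsum n (fun i tau => z tau i * mexp n A (Tbar - tau) i j)).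
      intros i Hi. cbv beta. apply (dpl_mult (fun tau => z tau i) (fun tau => mexp n A (Tbar - tau) i j)).
      apply (hdo_interior 0 Tbar (fun tau => z tau i) (fun tau => dz tau i)); auto. apply dpl_mexp_rev.
    - intros tau Htau.
      rewrite (rsum_ext n _ (fun i => dz tau i * mexp n A (Tbar - tau) i j - z tau i * mmul n A (mexp n A (Tbar - tau)) i j))
        by (intros; ring).
      rewrite rsum_minus, vm_AE.
      fold (vm n (dz tau) (mexp n A (Tbar - tau)) j).
      rewrite <- vm_minus.
      unfold vm at 1. apply rsum_nonneg. intros k Hk. apply Rmult_le_pos.
      pose proof (Hmid tau ltac:(lra) k Hk). simpl in H. lra.
      apply mexp_nonneg; auto; lra. }
  exists (z Tbar). split; auto. split; auto.
  intros j Hj. simpl. rewrite vm_mmul.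
  assert (H1 : vm n (vm n (z Tbar) J) (mexp n A Tbar) j <= vm n (fun i => -eps * 1 + z 0 i) (mexp n A Tbar) j).
  { apply (vm_mono n _ _ _ (mexp_nonneg n A Tbar HA ltac:(lra))); [|auto]. intros i Hi. pose proof (Hend i Hi). simpl in H. lra. }
  rewrite vm_linear in H1.
  pose proof (vm_pos_strict n (fun _ => 1) (mexp n A Tbar) j (mexp_nonneg n A Tbar HA ltac:(lra)) Hj
     (mexp_diag_pos n A Tbar j HA ltac:(lra) Hj) ltac:(intros; lra) ltac:(lra)).
  pose proof (Hcomp j Hj). nra.
Qed.

Lemma impl_g_c n A J Tbar : Metzler n A -> nonneg_mat n J -> 0 < Tbar ->
  (exists (xi dxi : R -> vec) (eps : R),
        vdiff_on n 0 Tbar xi dxi /\ vpos n (xi 0) /\ 0 < eps /\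
        vneg n (vm n (xi 0) A) /\
        (forall tau, 0 <= tau <= Tbar ->
           vnonpos n (fun j => vm n (xi tau) A j + dxi tau j)) /\
        vnonpos n (fun j => vm n (xi 0) J j - xi Tbar j + eps)) ->
  (exists lam : vec, vpos n lam /\ vneg n (vm n lam A) /\
        vneg n (fun j => vm n lam (mmul n J (mexp n A Tbar)) j - lam j)).
Proof.
  intros HA HJ HT [z [dz [eps [Hd [Hpos [Heps [HzA [Hmid Hend]]]]]]]].
  assert (Hcomp : forall j, (j < n)%nat -> vm n (z Tbar) (mexp n A Tbar) j <= z 0 j).
  { intros j Hj.
    set (phi := fun tau => rsum n (fun i => (-1 * z tau i) * mexp n A tau i j)).
    assert (E0 : phi 0 = - z 0 j).
    { unfold phi. rewrite (rsum_ext n _ (fun i => -1 * (z 0 i * ident i j))). rewrite rsum_scal, rsum_delta_l; auto. ring.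
      intros. rewrite mexp_0. ring. }
    assert (ET : phi Tbar = - vm n (z Tbar) (mexp n A Tbar) j).
    { unfold phi, vm. rewrite (rsum_ext n _ (fun i => -1 * (z Tbar i * mexp n A Tbar i j))) by (intros; ring).
      rewrite rsum_scal. ring. }
    cut (phi 0 <= phi Tbar). lra.
    apply (mono_lemma 0 Tbar phi (fun tau => rsum n (fun i => (-1 * dz tau i) * mexp n A tau i j +
                 (-1 * z tau i) * mmul n A (mexp n A tau) i j))); auto.
    - unfold phi. apply (cw_rsum n (fun i tau => (-1 * z tau i) * mexp n A tau i j)). intros i Hi. cbv beta.
      apply (limit_mul (fun tau => -1 * z tau i) (fun tau => mexp n A tau i j)).
      apply (limit_mul (fun _ => -1) (fun tau => z tau i)). apply cw_const.
      apply (hdo_cw 0 Tbar (fun tau => z tau i) (fun tau => dz tau i) 0 (Hd i Hi)). lra.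
      apply cont_cw. apply mexp_cont.
    - unfold phi. apply (cw_rsum n (fun i tau => (-1 * z tau i) * mexp n A tau i j)). intros i Hi. cbv beta.
      apply (limit_mul (fun tau => -1 * z tau i) (fun tau => mexp n A tau i j)).
      apply (limit_mul (fun _ => -1) (fun tau => z tau i)). apply cw_const.
      apply (hdo_cw 0 Tbar (fun tau => z tau i) (fun tau => dz tau i) Tbar (Hd i Hi)). lra.
      apply cont_cw. apply mexp_cont.
    - intros tau Htau. unfold phi. apply (dpl_rsum n (fun i tau => (-1 * z tau i) * mexp n A tau i j)).
      intros i Hi. cbv beta. apply (dpl_mult (fun tau => -1 * z tau i) (fun tau => mexp n A tau i j)).
      apply (dpl_eq (0 * z tau i + -1 * dz tau i)); [|ring].
      apply (dpl_mult (fun _ => -1) (fun tau => z tau i)). apply dpl_const.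
      apply (hdo_interior 0 Tbar (fun tau => z tau i) (fun tau => dz tau i)); auto.
      apply mexp_deriv_l.
    - intros tau Htau.
      rewrite (rsum_ext n _ (fun i => -1 * (dz tau i * mexp n A tau i j + z tau i * mmul n A (mexp n A tau) i j)))
        by (intros; ring).
      rewrite rsum_scal, rsum_plus, vm_AE.
      fold (vm n (dz tau) (mexp n A tau) j).
      rewrite Rplus_comm, <- (Rmult_1_l (vm n (vm n (z tau) A) _ j)), <- vm_linear.
      assert (vm n (fun i => 1 * vm n (z tau) A i + dz tau i) (mexp n A tau) j <= 0).
      { unfold vm at 1. rewrite <- (rsum_zero n). apply rsum_le. intros k Hk.
        pose proof (Hmid tau ltac:(lra) k Hk). simpl in H.
        pose proof (mexp_nonneg n A tau HA ltac:(lra) k j Hk Hj).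
        assert (0 <= - (1 * vm n (z tau) A k + dz tau k) * mexp n A tau k j) by (apply Rmult_le_pos; lra). lra. }
      lra. }
  exists (z 0). split; auto. split; auto.
  intros j Hj. simpl. rewrite vm_mmul.
  assert (H1 : vm n (vm n (z 0) J) (mexp n A Tbar) j <= vm n (fun i => -eps * 1 + z Tbar i) (mexp n A Tbar) j).
  { apply (vm_mono n _ _ _ (mexp_nonneg n A Tbar HA ltac:(lra))); [|auto]. intros i Hi. pose proof (Hend i Hi). simpl in H. lra. }
  rewrite vm_linear in H1.
  pose proof (vm_pos_strict n (fun _ => 1) (mexp n A Tbar) j (mexp_nonneg n A Tbar HA ltac:(lra)) Hj
     (mexp_diag_pos n A Tbar j HA ltac:(lra) Hj) ltac:(intros; lra) ltac:(lra)).
  pose proof (Hcomp j Hj). nra.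
Qed.

Lemma dpl_local f g x l r : 0 < r -> (forall s, Rabs (s - x) < r -> f s = g s) ->
  derivable_pt_lim g x l -> derivable_pt_lim f x l.
Proof.
  intros Hr Hfg H eps Heps. destruct (H eps Heps) as [d Hd].
  assert (Hp : 0 < Rmin d r) by (apply Rmin_pos; [apply cond_pos|auto]).
  exists (mkposreal _ Hp). intros h Hh0 Hh. simpl in Hh.
  pose proof (Rmin_l d r). pose proof (Rmin_r d r).
  rewrite !Hfg. apply Hd; auto. lra.
  replace (x - x) with 0 by ring. rewrite Rabs_R0; auto.
  replace (x + h - x) with h by ring. lra.
Qed.

Lemma dpl_uabs u : derivable_pt_lim (fun s => s * Rabs s) u (2 * Rabs u).
Proof.
  destruct (Rtotal_order u 0) as [Hn|[H0|Hp]].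
  - apply (dpl_local _ (fun s => - (s * s)) u _ (- u)). lra.
    intros s Hs. apply Rabs_def2 in Hs. rewrite Rabs_left by lra. ring.
    rewrite Rabs_left by lra.
    apply (dpl_eq (- (1 * u + u * 1))); [|ring].
    apply (derivable_pt_lim_opp (fun s => s * s)). apply (dpl_mult (fun s => s) (fun s => s)); apply dpl_id.
  - subst. intros eps Heps. exists (mkposreal _ Heps). intros h Hh0 Hh. simpl in Hh.
    cbv beta. rewrite Rplus_0_l, Rabs_R0.
    replace ((h * Rabs h - 0 * 0) / h - 2 * 0) with (Rabs h) by (field; auto). rewrite Rabs_Rabsolu; auto.
  - apply (dpl_local _ (fun s => s * s) u _ u). lra.
    intros s Hs. apply Rabs_def2 in Hs. rewrite Rabs_right by lra. ring.
    rewrite Rabs_right by lra.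
    apply (dpl_eq (1 * u + u * 1)); [|ring].
    apply (dpl_mult (fun s => s) (fun s => s)); apply dpl_id.
Qed.

Definition qf (u : R) : R := (u * u + u * Rabs u) / 2.
Definition dqf (u : R) : R := u + Rabs u.

Lemma dpl_qf u : derivable_pt_lim qf u (dqf u).
Proof.
  unfold qf, dqf.
  apply (dpl_ext (fun s => / 2 * (s * s + s * Rabs s))). intros; unfold Rdiv; ring.
  apply (dpl_eq (0 * (u * u + u * Rabs u) + / 2 * ((1 * u + u * 1) + 2 * Rabs u))); [|field].
  apply (dpl_mult (fun _ => / 2) (fun s => s * s + s * Rabs s)). apply dpl_const.
  apply (dpl_plus (fun s => s * s) (fun s => s * Rabs s)).
  apply (dpl_mult (fun s => s) (fun s => s)); apply dpl_id. apply dpl_uabs.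
Qed.

Lemma qf_nonpos u : u <= 0 -> qf u = 0.
Proof. intros. unfold qf. destruct (Req_dec u 0). subst; rewrite Rabs_R0; field.
  rewrite Rabs_left by lra. field. Qed.
Lemma qf_1 : qf 1 = 1.
Proof. unfold qf. rewrite Rabs_R1. field. Qed.
Lemma dqf_nonneg u : 0 <= dqf u.
Proof. unfold dqf. destruct (Rle_or_lt 0 u). rewrite Rabs_right; lra. rewrite Rabs_left; lra. Qed.
Lemma dqf_nonpos u : u <= 0 -> dqf u = 0.
Proof. intros. unfold dqf. destruct (Req_dec u 0). subst; rewrite Rabs_R0; ring.
  rewrite Rabs_left by lra. ring. Qed.

Lemma finite_choice n (P : nat -> R -> Prop) :
  (forall j, (j < n)%nat -> exists d, 0 < d /\ forall u, 0 <= u <= d -> P j u) ->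
  exists d, 0 < d /\ forall j, (j < n)%nat -> forall u, 0 <= u <= d -> P j u.
Proof.
  induction n; intros H.
  - exists 1. split. lra. intros; lia.
  - destruct (IHn ltac:(intros; apply H; lia)) as [d1 [Hd1 H1]].
    destruct (H n ltac:(lia)) as [d2 [Hd2 H2]].
    exists (Rmin d1 d2). split. apply Rmin_pos; auto.
    intros j Hj u Hu. pose proof (Rmin_l d1 d2). pose proof (Rmin_r d1 d2).
    destruct (Nat.eq_dec j n). subst. apply H2. lra. apply H1. lia. lra.
Qed.

Lemma dpl_vmE_shift n A c T t j : (j < n)%nat ->
  derivable_pt_lim (fun s => vm n c (mexp n A (s + T)) j) t (vm n (vm n c (mexp n A (t + T))) A j).
Proof.
  intros Hj. apply (dpl_eq (vm n (vm n c (mexp n A (t + T))) A j * (1 + 0))); [|ring].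
  apply (dpl_comp (fun s => s + T) (fun v => vm n c (mexp n A v) j)).
  apply (dpl_plus (fun s => s) (fun _ => T)). apply dpl_id. apply dpl_const.
  apply dpl_vmE; auto.
Qed.

Lemma dpl_vmE_neg n A c T t j : (j < n)%nat ->
  derivable_pt_lim (fun s => vm n c (mexp n A (T - s)) j) t (- vm n (vm n c (mexp n A (T - t))) A j).
Proof.
  intros Hj. apply (dpl_eq (vm n (vm n c (mexp n A (T - t))) A j * (0 - 1))); [|ring].
  apply (dpl_comp (fun s => T - s) (fun v => vm n c (mexp n A v) j)).
  apply (dpl_minus (fun _ => T) (fun s => s)). apply dpl_const. apply dpl_id.
  apply dpl_vmE; auto.
Qed.

Lemma vm_E0 n A c j : (j < n)%nat -> vm n c (mexp n A 0) j = c j.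
Proof. intros. unfold vm. rewrite (rsum_ext n _ (fun i => c i * ident i j)). apply rsum_delta_l; auto.
  intros. rewrite mexp_0; auto. Qed.

Lemma g_pos_near n A g : vpos n g ->
  exists d, 0 < d /\ forall j, (j < n)%nat -> forall u, 0 <= u <= d -> 0 <= vm n g (mexp n A (- u)) j.
Proof.
  intros Hg. apply (finite_choice n (fun j u => 0 <= vm n g (mexp n A (- u)) j)).
  intros j Hj.
  assert (Hc : continuity_pt (fun u => vm n g (mexp n A (0 - u)) j) 0).
  { eapply cont_of_dpl. apply dpl_vmE_neg; auto. }
  destruct (Hc (g j) (Hg j Hj)) as [d [Hd Hs]].
  exists (d / 2). split. lra. intros u Hu.
  destruct (Req_dec u 0) as [->|Hne].
  - rewrite Ropp_0, vm_E0 by auto. left; apply Hg; auto.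
  - specialize (Hs u). simpl in Hs. unfold R_dist in Hs.
    replace (0 - 0) with 0 in Hs by ring. rewrite vm_E0 in Hs by auto. replace (0 - u) with (- u) in Hs by ring.
    replace (u - 0) with u in Hs by ring.
    assert (Rabs (vm n g (mexp n A (- u)) j - g j) < g j).
    { apply Hs. split. split. exact I. auto. rewrite Rabs_right; lra. }
    apply Rabs_def2 in H. lra.
Qed.

Lemma vm_ext n a b M j : (forall i, (i < n)%nat -> a i = b i) -> vm n a M j = vm n b M j.
Proof. intros H. unfold vm. apply rsum_ext. intros. rewrite H; auto. Qed.

Lemma setup_wg n A J Tbar lam : Metzler n A -> nonneg_mat n J -> 0 < Tbar -> vpos n lam ->
  vneg n (fun j => vm n lam (mmul n J (mexp n A Tbar)) j - lam j) ->
  exists eps, 0 < eps /\ vpos n (fun j => lam j - vm n (fun i => vm n lam J i + eps) (mexp n A Tbar) j).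
Proof.
  intros HA HJ HT Hl Hc.
  set (o := fun j => vm n (fun _ => 1) (mexp n A Tbar) j).
  assert (Ho : forall j, (j < n)%nat -> 0 <= o j).
  { intros j Hj. unfold o, vm. apply rsum_nonneg. intros. apply Rmult_le_pos. lra. apply mexp_nonneg; auto; lra. }
  destruct (pos_lower_bound n (fun j => (lam j - vm n lam (mmul n J (mexp n A Tbar)) j) / (1 + o j))) as [c [Hc0 Hcj]].
  { intros j Hj. pose proof (Hc j Hj). simpl in H. pose proof (Ho j Hj). apply Rdiv_lt_0_compat; lra. }
  exists (c / 2). split. lra.
  intros j Hj. rewrite (vm_ext n _ (fun i => c / 2 * 1 + vm n lam J i)) by (intros; ring).
  rewrite vm_linear. fold (o j). rewrite <- vm_mmul.
  pose proof (Hcj j Hj). pose proof (Ho j Hj).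
  set (dd := lam j - vm n lam (mmul n J (mexp n A Tbar)) j) in *.
  assert (c * (1 + o j) <= dd).
  { replace dd with (dd / (1 + o j) * (1 + o j)) by (field; lra). apply Rmult_le_compat_r; lra. }
  unfold dd in H1. nra.
Qed.

Lemma vm_lin2 n a (p : R) b M j : vm n (fun i => a i + p * b i) M j = vm n a M j + p * vm n b M j.
Proof. unfold vm. rewrite <- rsum_scal, <- rsum_plus. apply rsum_ext. intros; ring. Qed.

Lemma dpl_affine c d t : derivable_pt_lim (fun tau => (tau - c) / d) t (/ d).
Proof.
  apply (dpl_ext (fun tau => (tau - c) * / d)). intros; unfold Rdiv; ring.
  apply (dpl_eq ((1 - 0) * / d + (t - c) * 0)); [|ring].
  apply (dpl_mult (fun tau => tau - c) (fun _ => / d)).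
  apply (dpl_minus (fun tau => tau) (fun _ => c)). apply dpl_id. apply dpl_const. apply dpl_const.
Qed.

Lemma dpl_phi c d t : derivable_pt_lim (fun tau => qf ((tau - c) / d)) t (dqf ((t - c) / d) * / d).
Proof.
  apply (dpl_comp (fun tau => (tau - c) / d) qf). apply dpl_affine. apply dpl_qf.
Qed.

Lemma impl_c_f n A J Tbar : Metzler n A -> nonneg_mat n J -> 0 < Tbar ->
  (exists lam : vec, vpos n lam /\ vneg n (vm n lam A) /\
        vneg n (fun j => vm n lam (mmul n J (mexp n A Tbar)) j - lam j)) ->
  (exists (zeta dzeta : R -> vec) (eps : R),
        vdiff_on n 0 Tbar zeta dzeta /\ vpos n (zeta Tbar) /\ 0 < eps /\
        vneg n (vm n (zeta Tbar) A) /\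
        (forall tau, 0 <= tau <= Tbar ->
           vnonpos n (fun j => vm n (zeta tau) A j - dzeta tau j)) /\
        vnonpos n (fun j => vm n (zeta Tbar) J j - zeta 0 j + eps)).
Proof.
  intros HA HJ HT [lam [Hl [HlA Hc]]].
  destruct (setup_wg n A J Tbar lam HA HJ HT Hl Hc) as [eps [Heps Hg]].
  set (w := fun i => vm n lam J i + eps) in *.
  set (g := fun j => lam j - vm n w (mexp n A Tbar) j) in *.
  destruct (g_pos_near n A g Hg) as [s0 [Hs0 Hgp]].
  set (s := Rmin s0 Tbar).
  assert (Hs : 0 < s) by (apply Rmin_pos; auto).
  assert (Hss0 : s <= s0) by apply Rmin_l.
  assert (HsT : s <= Tbar) by apply Rmin_r.
  set (phi := fun tau => qf ((tau - (Tbar - s)) / s)).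
  set (dphi := fun tau => dqf ((tau - (Tbar - s)) / s) * / s).
  set (zeta := fun tau j => vm n w (mexp n A tau) j + phi tau * vm n g (mexp n A (tau + - Tbar)) j).
  set (dzeta := fun tau j => vm n (vm n w (mexp n A tau)) A j +
      (dphi tau * vm n g (mexp n A (tau + - Tbar)) j + phi tau * vm n (vm n g (mexp n A (tau + - Tbar))) A j)).
  assert (HphiT : phi Tbar = 1).
  { unfold phi. replace ((Tbar - (Tbar - s)) / s) with 1 by (field; lra). apply qf_1. }
  assert (Hphi0 : phi 0 = 0).
  { unfold phi. apply qf_nonpos. unfold Rdiv. 
    assert (0 < / s) by (apply Rinv_0_lt_compat; auto). 
    assert ((0 - (Tbar - s)) <= 0) by lra. 
    replace ((0 - (Tbar - s)) * / s) with (- ((Tbar - s) * / s)) by ring.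
    assert (0 <= (Tbar - s) * / s) by (apply Rmult_le_pos; lra). lra. }
  assert (zT : forall j, (j < n)%nat -> zeta Tbar j = lam j).
  { intros j Hj. unfold zeta. rewrite HphiT. replace (Tbar + - Tbar) with 0 by ring.
    rewrite vm_E0 by auto. unfold g. ring. }
  exists zeta, dzeta, eps.
  split; [|split; [|split; [|split; [|split]]]].
  - intros i Hi. apply dpl_to_hdo. intros tau _. unfold zeta, dzeta.
    apply (dpl_plus (fun tau => vm n w (mexp n A tau) i) (fun tau => phi tau * vm n g (mexp n A (tau + - Tbar)) i)).
    apply dpl_vmE; auto.
    apply (dpl_mult phi (fun tau => vm n g (mexp n A (tau + - Tbar)) i)).
    apply dpl_phi. apply dpl_vmE_shift; auto.
  - intros j Hj. rewrite zT; auto.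
  - auto.
  - intros j Hj. rewrite (vm_ext n _ lam) by auto. apply HlA; auto.
  - intros tau Htau j Hj. simpl. unfold zeta, dzeta.
    rewrite vm_lin2.
    assert (Hd : 0 <= dphi tau).
    { unfold dphi. apply Rmult_le_pos. apply dqf_nonneg. left; apply Rinv_0_lt_compat; auto. }
    destruct (Rle_or_lt ((tau - (Tbar - s)) / s) 0) as [Hle|Hgt].
    + unfold dphi. rewrite dqf_nonpos by auto. lra.
    + assert (Htau2 : Tbar - s < tau).
      { unfold Rdiv in Hgt. destruct (Rle_or_lt tau (Tbar - s)); auto.
        assert (0 <= - (tau - (Tbar - s)) * / s) by (apply Rmult_le_pos; [lra| left; apply Rinv_0_lt_compat; auto]). lra. }
      pose proof (Hgp j Hj (Tbar - tau) ltac:(lra)).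
      replace (- (Tbar - tau)) with (tau + - Tbar) in H by ring.
      assert (0 <= dphi tau * vm n g (mexp n A (tau + - Tbar)) j) by (apply Rmult_le_pos; auto).
      lra.
  - intros j Hj. simpl. rewrite (vm_ext n (zeta Tbar) lam) by auto.
    unfold zeta. rewrite Hphi0, vm_E0 by auto. unfold w. lra.
Qed.

Lemma impl_c_g n A J Tbar : Metzler n A -> nonneg_mat n J -> 0 < Tbar ->
  (exists lam : vec, vpos n lam /\ vneg n (vm n lam A) /\
        vneg n (fun j => vm n lam (mmul n J (mexp n A Tbar)) j - lam j)) ->
  (exists (xi dxi : R -> vec) (eps : R),
        vdiff_on n 0 Tbar xi dxi /\ vpos n (xi 0) /\ 0 < eps /\
        vneg n (vm n (xi 0) A) /\
        (forall tau, 0 <= tau <= Tbar ->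
           vnonpos n (fun j => vm n (xi tau) A j + dxi tau j)) /\
        vnonpos n (fun j => vm n (xi 0) J j - xi Tbar j + eps)).
Proof.
  intros HA HJ HT [lam [Hl [HlA Hc]]].
  destruct (setup_wg n A J Tbar lam HA HJ HT Hl Hc) as [eps [Heps Hg]].
  set (w := fun i => vm n lam J i + eps) in *.
  set (g := fun j => lam j - vm n w (mexp n A Tbar) j) in *.
  destruct (g_pos_near n A g Hg) as [s0 [Hs0 Hgp]].
  set (s := Rmin s0 Tbar).
  assert (Hs : 0 < s) by (apply Rmin_pos; auto).
  assert (Hss0 : s <= s0) by apply Rmin_l.
  assert (HsT : s <= Tbar) by apply Rmin_r.
  set (phi := fun tau => qf ((tau - s) / - s)).
  set (dphi := fun tau => dqf ((tau - s) / - s) * / - s).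
  set (xi := fun tau j => vm n w (mexp n A (Tbar - tau)) j + phi tau * vm n g (mexp n A (0 - tau)) j).
  set (dxi := fun tau j => - vm n (vm n w (mexp n A (Tbar - tau))) A j +
      (dphi tau * vm n g (mexp n A (0 - tau)) j + phi tau * (- vm n (vm n g (mexp n A (0 - tau))) A j))).
  assert (Hphi0 : phi 0 = 1).
  { unfold phi. replace ((0 - s) / - s) with 1 by (field; lra). apply qf_1. }
  assert (HphiT : phi Tbar = 0).
  { unfold phi. apply qf_nonpos. replace ((Tbar - s) / - s) with (- ((Tbar - s) * / s)) by (field; lra).
    assert (0 <= (Tbar - s) * / s) by (apply Rmult_le_pos; [lra| left; apply Rinv_0_lt_compat; auto]). lra. }
  assert (z0 : forall j, (j < n)%nat -> xi 0 j = lam j).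
  { intros j Hj. unfold xi. rewrite Hphi0. replace (0 - 0) with 0 by ring. rewrite Rminus_0_r.
    rewrite vm_E0 by auto. unfold g. ring. }
  exists xi, dxi, eps.
  split; [|split; [|split; [|split; [|split]]]].
  - intros i Hi. apply dpl_to_hdo. intros tau _. unfold xi, dxi.
    apply (dpl_plus (fun tau => vm n w (mexp n A (Tbar - tau)) i) (fun tau => phi tau * vm n g (mexp n A (0 - tau)) i)).
    apply dpl_vmE_neg; auto.
    apply (dpl_mult phi (fun tau => vm n g (mexp n A (0 - tau)) i)).
    apply dpl_phi. apply dpl_vmE_neg; auto.
  - intros j Hj. rewrite z0; auto.
  - auto.
  - intros j Hj. rewrite (vm_ext n _ lam) by auto. apply HlA; auto.
  - intros tau Htau j Hj. simpl. unfold xi, dxi.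
    rewrite vm_lin2.
    assert (Hd : dphi tau <= 0).
    { unfold dphi. pose proof (dqf_nonneg ((tau - s) / - s)).
      assert (/ - s < 0) by (apply Rinv_lt_0_compat; lra). nra. }
    destruct (Rle_or_lt ((tau - s) / - s) 0) as [Hle|Hgt].
    + unfold dphi. rewrite dqf_nonpos by auto. lra.
    + assert (Htau2 : tau < s).
      { replace ((tau - s) / - s) with ((s - tau) * / s) in Hgt by (field; lra).
        destruct (Rle_or_lt s tau); auto.
        assert (0 <= (tau - s) * / s) by (apply Rmult_le_pos; [lra| left; apply Rinv_0_lt_compat; auto]). lra. }
      pose proof (Hgp j Hj tau ltac:(lra)).
      replace (- tau) with (0 - tau) in H by ring.
      assert (dphi tau * vm n g (mexp n A (0 - tau)) j <= 0).
      { assert (0 <= - dphi tau * vm n g (mexp n A (0 - tau)) j) by (apply Rmult_le_pos; lra). lra. }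
      lra.
  - intros j Hj. simpl. rewrite (vm_ext n (xi 0) lam) by auto.
    unfold xi. rewrite HphiT. rewrite Rminus_diag, vm_E0 by auto. unfold w. lra.
Qed.

Definition absv (y : vec) : vec := fun i => Rabs (y i).

Lemma absv_nonneg n y : vnonneg n (absv y).
Proof. intros i _. apply Rabs_pos. Qed.

Lemma abs_mv n M y i : nonneg_mat n M -> (i < n)%nat -> Rabs (mv n M y i) <= mv n M (absv y) i.
Proof.
  intros HM Hi. unfold mv. eapply Rle_trans. apply rsum_abs. apply rsum_le. intros j Hj.
  rewrite Rabs_mult. rewrite (Rabs_right (M i j)). unfold absv. lra. apply Rle_ge, HM; auto.
Qed.

Lemma mv_mono n M u v i : nonneg_mat n M -> (forall j, (j < n)%nat -> u j <= v j) -> (i < n)%nat ->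
  mv n M u i <= mv n M v i.
Proof. intros HM H Hi. unfold mv. apply rsum_le. intros j Hj. apply Rmult_le_compat_l. apply HM; auto. auto. Qed.

Lemma first_interval (t : nat -> R) tau N : (forall k, t k < t (S k)) -> t O < tau -> tau <= t N ->
  exists k, t k < tau <= t (S k).
Proof.
  intros Hinc H0. induction N; intros HN. lra.
  destruct (Rle_or_lt tau (t N)). apply IHN; auto. exists N. split; auto.
Qed.

Lemma t_mono (t : nat -> R) : (forall k, t k < t (S k)) -> forall i j, (i <= j)%nat -> t i <= t j.
Proof. intros H i j Hij. induction Hij. lra. pose proof (H m). lra. Qed.

Lemma stability n A J Tbar : Metzler n A -> nonneg_mat n J -> 0 < Tbar ->
  (exists lam mu nu : vec, vpos n lam /\ vpos n mu /\ vpos n nu /\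
        (forall x, vnonneg n x -> dot n lam (mv n A x) <= - dot n mu x) /\
        (forall x theta, vnonneg n x -> Tbar <= theta ->
           dot n lam (mv n J (mv n (mexp n A theta) x)) - dot n lam x
             <= - dot n nu x)) -> AS_min_dwell n A J Tbar.
Proof.
  intros HA HJ HT [lam [mu [nu [Hl [Hm [Hn [H1 H2]]]]]]] t [Hinc [Hinf Hdw]].
  destruct (pos_lower_bound n (fun i => nu i / lam i)) as [c0 [Hc0 Hcj]].
  { intros i Hi. apply Rdiv_lt_0_compat; auto. }
  set (c := Rmin c0 (1/2)).
  assert (Hc : 0 < c) by (apply Rmin_pos; lra).
  assert (Hc1 : c <= 1/2) by apply Rmin_r.
  assert (Hcc0 : c <= c0) by apply Rmin_l.
  assert (Hnu : forall i, (i < n)%nat -> c * lam i <= nu i).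
  { intros i Hi. pose proof (Hcj i Hi). pose proof (Hl i Hi).
    replace (nu i) with (nu i / lam i * lam i) by (field; lra). apply Rmult_le_compat_r; lra. }
  destruct (pos_lower_bound n lam Hl) as [lmin [Hlmin Hlmini]].
  set (lmax := 1 + rsum n lam).
  assert (Hlmax : forall i, (i < n)%nat -> lam i <= lmax).
  { intros i Hi. unfold lmax. pose proof (rsum_ge_term n lam i ltac:(intros; left; apply Hl; auto) Hi). lra. }
  assert (Hlmax0 : 0 < lmax) by (unfold lmax; pose proof (rsum_nonneg n lam ltac:(intros; left; apply Hl; auto)); lra).
  assert (HlA : vnonpos n (vm n lam A)).
  { intros j Hj. specialize (H1 (evec j) (evec_nonneg n j)).
    rewrite dot_mv, !dot_evec in H1 by auto. pose proof (Hm j Hj). lra. }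
  assert (Hlow : forall y, lmin * vnorm n y <= dot n lam (absv y)).
  { intros y. unfold vnorm, dot. rewrite <- rsum_scal. apply rsum_le. intros i Hi.
    apply Rmult_le_compat_r. apply Rabs_pos. auto. }
  assert (Hup : forall y, dot n lam (absv y) <= lmax * vnorm n y).
  { intros y. unfold vnorm, dot. rewrite <- rsum_scal. apply rsum_le. intros i Hi.
    apply Rmult_le_compat_r. apply Rabs_pos. auto. }
  assert (Hflow : forall z s, 0 <= s -> dot n lam (absv (mv n (mexp n A s) z)) <= dot n lam (absv z)).
  { intros z s Hs.
    apply Rle_trans with (dot n lam (mv n (mexp n A s) (absv z))).
    { apply dot_mono. intros i Hi; left; apply Hl; auto. intros i Hi. apply abs_mv; auto. apply mexp_nonneg; auto. }
    rewrite dot_mv. apply dot_mono_l. apply absv_nonneg. intros i Hi. apply row_decr; auto. }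
  assert (Hjump : forall z s, Tbar <= s -> dot n lam (absv (mv n J (mv n (mexp n A s) z))) <= (1 - c) * dot n lam (absv z)).
  { intros z s Hs.
    apply Rle_trans with (dot n lam (mv n J (mv n (mexp n A s) (absv z)))).
    { apply dot_mono. intros i Hi; left; apply Hl; auto. intros i Hi.
      eapply Rle_trans. apply abs_mv; auto. apply mv_mono; auto. intros j Hj. apply abs_mv; auto.
      apply mexp_nonneg; auto; lra. }
    pose proof (H2 (absv z) s (absv_nonneg n z) Hs).
    assert (c * dot n lam (absv z) <= dot n nu (absv z)).
    { unfold dot. rewrite <- rsum_scal. apply rsum_le. intros i Hi. rewrite <- Rmult_assoc.
      apply Rmult_le_compat_r. apply Rabs_pos. auto. }
    lra. }
  assert (Hsol : forall x0 x, is_solution n A J t x0 x ->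
     forall k tau, t k < tau <= t (S k) -> dot n lam (absv (x tau)) <= (1 - c) ^ k * dot n lam (absv x0)).
  { intros x0 x [Hx0 Hx].
    set (zk := fun k => match k with O => x0 | S _ => mv n J (x (t k)) end).
    assert (Hint : forall k tau, t k < tau <= t (S k) -> dot n lam (absv (x tau)) = dot n lam (absv (mv n (mexp n A (tau - t k)) (zk k)))).
    { intros k tau Ht. apply dot_ext. intros i Hi. unfold absv. rewrite (Hx k tau Ht i Hi). destruct k; reflexivity. }
    assert (HV : forall k, dot n lam (absv (zk k)) <= (1 - c) ^ k * dot n lam (absv x0)).
    { induction k.
      - simpl. lra.
      - assert (E1 : dot n lam (absv (zk (S k))) = dot n lam (absv (mv n J (mv n (mexp n A (t (S k) - t k)) (zk k))))).
        { apply dot_ext. intros i Hi. unfold absv. simpl zk. f_equal. f_equal. unfold mv. apply rsum_ext. intros j Hj.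
          f_equal. rewrite (Hx k (t (S k)) ltac:(split; [apply Hinc|lra]) j Hj). destruct k; reflexivity. }
        rewrite E1. eapply Rle_trans. apply Hjump. apply Hdw.
        simpl. assert (0 <= 1 - c) by lra.
        assert ((1 - c) * dot n lam (absv (zk k)) <= (1 - c) * ((1 - c) ^ k * dot n lam (absv x0))) by (apply Rmult_le_compat_l; auto).
        lra. }
    intros k tau Ht. rewrite (Hint k tau Ht). eapply Rle_trans. apply Hflow. pose proof (proj1 Ht). lra. apply HV. }
  assert (Hpow1 : forall k, 0 <= (1 - c) ^ k <= 1).
  { induction k; simpl. lra. split. apply Rmult_le_pos; lra. nra. }
  assert (Hpowm : forall k K, (K <= k)%nat -> (1 - c) ^ k <= (1 - c) ^ K).
  { intros k K HK. induction HK. lra. simpl. pose proof (Hpow1 m). nra. }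
  assert (Hbound : forall x0 x, is_solution n A J t x0 x -> forall tau, t O <= tau ->
     exists k, dot n lam (absv (x tau)) <= (1 - c) ^ k * dot n lam (absv x0) /\
       (forall K, t (S K) <= tau -> (K <= k)%nat)).
  { intros x0 x Hs tau Htau. destruct (Req_dec tau (t O)) as [->|Hne].
    - exists O. split. 
      + simpl. rewrite Rmult_1_l. right. apply dot_ext. intros i Hi. unfold absv. destruct Hs as [Hx0 _]. rewrite Hx0; auto.
      + intros K HK. pose proof (t_mono t Hinc 1 (S K) ltac:(lia)). pose proof (Hinc O). lra.
    - destruct (Hinf tau) as [N HN]. specialize (HN N (le_n N)).
      destruct (first_interval t tau N Hinc ltac:(lra) ltac:(lra)) as [k Hk].
      exists k. split. apply Hsol; auto.
      intros K HK. destruct (le_lt_dec K k); auto.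
      pose proof (t_mono t Hinc (S k) K ltac:(lia)). pose proof (Hinc K). lra. }
  split.
  - intros eps Heps. exists (eps * lmin / lmax). split. apply Rdiv_lt_0_compat; auto. apply Rmult_lt_0_compat; auto.
    intros x0 x Hs Hx0 tau Htau.
    destruct (Hbound x0 x Hs tau Htau) as [k [Hk _]].
    pose proof (Hpow1 k). pose proof (Hlow (x tau)). pose proof (Hup x0).
    assert (0 <= dot n lam (absv x0)) by (apply rsum_nonneg; intros; apply Rmult_le_pos; [left; apply Hl; auto|apply Rabs_pos]).
    assert ((1 - c) ^ k * dot n lam (absv x0) <= dot n lam (absv x0)) by nra.
    assert (lmax * vnorm n x0 < eps * lmin).
    { replace (eps * lmin) with (lmax * (eps * lmin / lmax)) by (field; lra). apply Rmult_lt_compat_l; auto. }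
    assert (Hfin : lmin * vnorm n (x tau) < lmin * eps) by lra.
    apply Rmult_lt_reg_l in Hfin; auto.
  - intros x0 x Hs eps Heps.
    set (V0 := dot n lam (absv x0)).
    assert (HV0 : 0 <= V0) by (apply rsum_nonneg; intros; apply Rmult_le_pos; [left; apply Hl; auto|apply Rabs_pos]).
    destruct (pow_lt_1_zero (1 - c) ltac:(rewrite Rabs_right; lra) (eps * lmin / (V0 + 1)) ltac:(apply Rdiv_lt_0_compat; [apply Rmult_lt_0_compat|]; lra)) as [K HK].
    specialize (HK K (le_n K)). rewrite Rabs_right in HK by (apply Rle_ge; apply Hpow1).
    exists (t (S K)). intros tau Htau.
    assert (Ht0 : t O <= tau). { pose proof (t_mono t Hinc O (S K) ltac:(lia)). lra. }
    destruct (Hbound x0 x Hs tau Ht0) as [k [Hk Hkk]].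
    specialize (Hkk K Htau). pose proof (Hpowm k K Hkk). pose proof (Hpow1 k).
    pose proof (Hlow (x tau)). fold V0 in Hk.
    assert ((1 - c) ^ k * V0 <= (1 - c) ^ K * V0) by (apply Rmult_le_compat_r; auto).
    assert ((1 - c) ^ K * V0 < eps * lmin).
    { assert ((1 - c) ^ K * V0 <= eps * lmin / (V0 + 1) * V0) by (apply Rmult_le_compat_r; lra).
      assert (eps * lmin / (V0 + 1) * V0 < eps * lmin).
      { replace (eps * lmin / (V0 + 1) * V0) with (eps * lmin * (V0 / (V0 + 1))) by (field; lra).
        assert (V0 / (V0 + 1) < 1). { apply (Rmult_lt_reg_r (V0 + 1)); [lra|]. replace (V0 / (V0 + 1) * (V0 + 1)) with V0 by (field; lra). lra. }
        assert (0 < eps * lmin) by (apply Rmult_lt_0_compat; auto). nra. }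
      lra. }
    assert (Hfin : lmin * vnorm n (x tau) < lmin * eps) by lra.
    apply Rmult_lt_reg_l in Hfin; auto.
Qed.

Theorem theorem3 (n : nat) (A J : mat) (Tbar : R)
  (HA : Metzler n A) (HJ : nonneg_mat n J) (HT : 0 < Tbar) :
  let Pa := exists lam mu nu : vec, vpos n lam /\ vpos n mu /\ vpos n nu /\
        (forall x, vnonneg n x -> dot n lam (mv n A x) <= - dot n mu x) /\
        (forall x theta, vnonneg n x -> Tbar <= theta ->
           dot n lam (mv n J (mv n (mexp n A theta) x)) - dot n lam x
             <= - dot n nu x) in
  let Pb := exists lam : vec, vpos n lam /\ vneg n (vm n lam A) /\
        (forall theta, Tbar <= theta ->
           vneg n (fun j => vm n lam (mmul n J (mexp n A theta)) j - lam j)) in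
  let Pc := exists lam : vec, vpos n lam /\ vneg n (vm n lam A) /\
        vneg n (fun j => vm n lam (mmul n J (mexp n A Tbar)) j - lam j) in
  let Pd := exists lam : vec, vpos n lam /\ vneg n (vm n lam A) /\
        vneg n (vm n lam (msub (mmul n J (mexp n A Tbar)) ident)) in
  let Pe := forall y : vec, vnonneg (3 * n) y ->
        (forall i, (i < n)%nat ->
           rsum (3 * n) (fun j =>
             blockK n A (msub (mmul n J (mexp n A Tbar)) ident) i j * y j) = 0) ->
        forall j, (j < 3 * n)%nat -> y j = 0 in
  let Pf := exists (zeta dzeta : R -> vec) (eps : R),
        vdiff_on n 0 Tbar zeta dzeta /\ vpos n (zeta Tbar) /\ 0 < eps /\
        vneg n (vm n (zeta Tbar) A) /\
        (forall tau, 0 <= tau <= Tbar ->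
           vnonpos n (fun j => vm n (zeta tau) A j - dzeta tau j)) /\
        vnonpos n (fun j => vm n (zeta Tbar) J j - zeta 0 j + eps) in
  let Pg := exists (xi dxi : R -> vec) (eps : R),
        vdiff_on n 0 Tbar xi dxi /\ vpos n (xi 0) /\ 0 < eps /\
        vneg n (vm n (xi 0) A) /\
        (forall tau, 0 <= tau <= Tbar ->
           vnonpos n (fun j => vm n (xi tau) A j + dxi tau j)) /\
        vnonpos n (fun j => vm n (xi 0) J j - xi Tbar j + eps) in
  (Pa <-> Pb) /\ (Pa <-> Pc) /\ (Pa <-> Pd) /\ (Pa <-> Pe) /\
  (Pa <-> Pf) /\ (Pa <-> Pg) /\ (Pa -> AS_min_dwell n A J Tbar).
Proof.
  cbv zeta.
  pose proof (impl_a_b n A J Tbar) as ab.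
  pose proof (impl_c_a n A J Tbar HA HJ HT) as ca.
  pose proof (impl_c_d n A J Tbar) as cd.
  pose proof (impl_d_e n A (msub (mmul n J (mexp n A Tbar)) ident)) as de.
  pose proof (impl_e_d n A (msub (mmul n J (mexp n A Tbar)) ident)) as ed.
  pose proof (impl_f_c n A J Tbar HA HJ HT) as fc.
  pose proof (impl_c_f n A J Tbar HA HJ HT) as cf.
  pose proof (impl_g_c n A J Tbar HA HJ HT) as gc.
  pose proof (impl_c_g n A J Tbar HA HJ HT) as cg.
  pose proof (stability n A J Tbar HA HJ HT) as st.
  assert (bc : (exists lam : vec, vpos n lam /\ vneg n (vm n lam A) /\
        (forall theta, Tbar <= theta ->
           vneg n (fun j => vm n lam (mmul n J (mexp n A theta)) j - lam j))) ->
     (exists lam : vec, vpos n lam /\ vneg n (vm n lam A) /\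
        vneg n (fun j => vm n lam (mmul n J (mexp n A Tbar)) j - lam j))).
  { intros [lam [H1 [H2 H3]]]. exists lam. split; auto. split; auto. apply H3. lra. }
  destruct cd as [cd dc].
  split; [split; auto|].
  split; [split; auto|].
  split; [split; auto|].
  split; [split; auto|].
  split; [split; auto|].
  split; [split; auto|].
  exact st.
Qed.
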